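(* Let $u_0\in H^s(\mathbb R)$ with $s$ large enough that the quantities below are finite, $T>0$, $c>0$. For every $\theta\in[0,1]$, $\Delta t>0$, $\Delta x>0$, every $n\in\{0,\dots,N-1\}$, every $\gamma\in[0,\frac12)$ and $\sigma\in\{0,1\}$, $$\begin{aligned}\|\mathcal A_\theta e^{n+1}\|^2_{\ell^2_\Delta}\le{}&\|\mathcal A_\theta e^{n}\|^2_{\ell^2_\Delta}+\Delta tA_a\|e^n\|^2_{\ell^2_\Delta}+\Delta t\|\mathcal A_{-(1-\theta)}e^n\|^2_{\ell^2_\Delta}+\Delta t\|\epsilon^n\|^2_{\ell^2_\Delta}\Big\{1+4\frac{\Delta t}{\Delta x}+\Delta t\Big\}\\&+\Delta t\langle A_b,[D_+(e)^n]^2\rangle+\Delta t^2A_c\|D(e)^n\|^2_{\ell^2_\Delta}+\Delta tA_d\|D_+D_-(e)^n\|^2_{\ell^2_\Delta}\\&+\Delta tA_e\|D_+D(e)^n\|^2_{\ell^2_\Delta}+\Delta tA_f\|D_+D_+D_-(e)^n\|^2_{\ell^2_\Delta},\end{aligned}$$ where, writing $U=\|[u_\Delta]^n\|_{\ell^\infty}$, $U_+=\|D_+([u_\Delta])^n\|_{\ell^\infty}$, $U_-=\|D_-([u_\Delta])^n\|_{\ell^\infty}$, $E=\|e^n\|_{\ell^\infty}$, $X=\Delta x^{\frac12-\gamma}+E+9E^2\Delta x^{\gamma-\frac12}$ and $\mathbf 1=(1,1,\dots)$, $$A_a=U^2+U_+\Big(2-\theta+\frac{\Delta t}{\Delta x}\Big[2c+\frac23E+\frac32U\Big]\Big)+\frac{\Delta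 t^2}{\Delta x^2}U_+^2+\frac{\Delta t}{\Delta x}(U^2+2c^2),$$ $$A_b=\Big(\frac{\Delta x}{6}D_+(e)^n-c\mathbf 1\Big)(\Delta x-c\Delta t)+(1-\theta)\Delta t\,U_+^{2-\sigma}\mathbf 1,$$ $$A_c=E^2[1+\Delta x]+U^2-c^2+2EU+\frac{2c}{3}E,\qquad A_d=(1-\theta)\Delta t\Big[U_+^{\sigma}+\frac{\Delta x}{2}U_-\Big],$$ $$A_e=2(1-\theta)\Delta t\Big\{U+E+\frac X2\Big\}-\Delta x,$$ $$A_f=\Delta t\Big\{(1-2\theta)+\frac{(1-\theta)\Delta x^2}{2}\Big[c+\frac X2\Big]+\Delta t(1-\theta)U_+\Big\}-\frac{\Delta x^3}{4}.$$
   Context: KdV equation $\partial_t u+\partial_x(u^2/2)+\partial_x^3u=0$ with datum $u_0$ and exact solution $u$. $t^n=n\Delta t$, $x_j=j\Delta x$, $N=\lfloor T/\Delta t\rfloor$. For sequences: $D_+(a)_j=(a_{j+1}-a_j)/\Delta x$, $D_-(a)_j=(a_j-a_{j-1})/\Delta x$, $D=\frac12(D_++D_-)$; products and powers are componentwise; $\langle a,b\rangle=\Delta x\sum_ja_jb_j$, $\|a\|_{\ell^2_\Delta}=\langle a,a\rangle^{1/2}$, $\|a\|_{\ell^\infty}=\sup_j|a_j|$. For $\alpha\in\mathbb R$, $\mathcal A_\alpha=I+\alpha\Delta t D_+D_+D_-$ on $\ell^2_\Delta(\mathbb Z)$. Scheme with parameters $c,\theta$: $\frac{v^{n+1}_j-v^n_j}{\Delta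 t}+D(\frac{v^2}{2})^n_j+\theta D_+D_+D_-(v)^{n+1}_j+(1-\theta)D_+D_+D_-(v)^n_j=\frac{c\Delta x}{2}D_+D_-(v)^n_j$, with $v^0_j=\frac1{\Delta x}\int_{x_j}^{x_{j+1}}u_0$. Averaged exact solution $[u_\Delta]^0_j=\frac1{\Delta x}\int_{x_j}^{x_{j+1}}u_0$, $[u_\Delta]^n_j=\frac{1}{\Delta x(\min(t^{n+1},T)-t^n)}\int_{t^n}^{\min(t^{n+1},T)}\int_{x_j}^{x_{j+1}}u\,dy\,ds$ for $n\ge1$. Error $e^n_j=v^n_j-[u_\Delta]^n_j$. Consistency error $\epsilon^n_j=\frac{[u_\Delta]^{n+1}_j-[u_\Delta]^n_j}{\Delta t}+D(\frac{[u_\Delta]^2}{2})^n_j+\theta D_+D_+D_-([u_\Delta])^{n+1}_j+(1-\theta)D_+D_+D_-([u_\Delta])^n_j-\frac{c\Delta x}{2}D_+D_-([u_\Delta])^n_j$. *)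

(* Defs.v *)
From Stdlib Require Import Reals ZArith.
From Coquelicot Require Import Coquelicot.
Open Scope R_scope.

Definition seqZ := Z -> R.

Definition sumZ (a : seqZ) : R :=
  Series (fun k : nat => a (Z.of_nat k)) +
  Series (fun k : nat => a (- Z.of_nat (S k))%Z).

Definition l2Z (a : seqZ) : Prop :=
  ex_series (fun k : nat => (a (Z.of_nat k)) ^ 2) /\
  ex_series (fun k : nat => (a (- Z.of_nat (S k))%Z) ^ 2).

Definition ipD (dx : R) (a b : seqZ) : R := dx * sumZ (fun j => a j * b j).
Definition normD (dx : R) (a : seqZ) : R := sqrt (ipD dx a a).

Definition linf (a : seqZ) : R :=
  real (Lub_Rbar (fun r => exists j : Z, r = Rabs (a j))).

Definition sqZ (a : seqZ) : seqZ := fun j => a j ^ 2.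

Definition Dp (dx : R) (a : seqZ) : seqZ := fun j => (a (j + 1)%Z - a j) / dx.
Definition Dm (dx : R) (a : seqZ) : seqZ := fun j => (a j - a (j - 1)%Z) / dx.
Definition Dc (dx : R) (a : seqZ) : seqZ := fun j => (Dp dx a j + Dm dx a j) / 2.
Definition D3 (dx : R) (a : seqZ) : seqZ := Dp dx (Dp dx (Dm dx a)).

Definition Aop (alpha dt dx : R) (a : seqZ) : seqZ :=
  fun j => a j + alpha * dt * D3 dx a j.

Definition xg (dx : R) (j : Z) : R := IZR j * dx.
Definition tg (dt : R) (n : nat) : R := INR n * dt.

Definition Nsteps (T dt : R) : nat := Z.to_nat (Int_part (T / dt)).

Definition KdV_solution (u0 : R -> R) (T : R) (u : R -> R -> R) : Prop :=
  (forall x, u 0 x = u0 x) /\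
  (forall t x, 0 <= t <= T ->
     continuous (fun p : R * R => u (Rmax 0 (Rmin T (fst p))) (snd p)) (t, x)) /\
  (forall t x, 0 < t < T ->
     ex_derive (fun s => u s x) t /\
     ex_derive (fun y => u t y ^ 2 / 2) x /\
     ex_derive_n (fun y => u t y) 3 x /\
     Derive (fun s => u s x) t + Derive (fun y => u t y ^ 2 / 2) x
       + Derive_n (fun y => u t y) 3 x = 0).

Definition uavg (u0 : R -> R) (u : R -> R -> R) (T dt dx : R) (n : nat) : seqZ :=
  fun j =>
  match n with
  | O => / dx * RInt u0 (xg dx j) (xg dx (j + 1))
  | S _ =>
      / (dx * (Rmin (tg dt (S n)) T - tg dt n)) *
      RInt (fun s => RInt (fun y => u s y) (xg dx j) (xg dx (j + 1)))
           (tg dt n) (Rmin (tg dt (S n)) T)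
  end.

Definition scheme_solution (c theta dt dx : R) (u0 : R -> R) (v : nat -> seqZ) : Prop :=
  (forall j, v O j = / dx * RInt u0 (xg dx j) (xg dx (j + 1))) /\
  (forall n, l2Z (v n)) /\
  (forall n j,
     (v (S n) j - v n j) / dt + Dc dx (fun k => v n k ^ 2 / 2) j
     + theta * D3 dx (v (S n)) j + (1 - theta) * D3 dx (v n) j
     = c * dx / 2 * Dp dx (Dm dx (v n)) j).

Definition err (v : nat -> seqZ) (ua : nat -> seqZ) (n : nat) : seqZ :=
  fun j => v n j - ua n j.

Definition cons_err (c theta dt dx : R) (ua : nat -> seqZ) (n : nat) : seqZ :=
  fun j =>
    (ua (S n) j - ua n j) / dt + Dc dx (fun k => ua n k ^ 2 / 2) j
    + theta * D3 dx (ua (S n)) j + (1 - theta) * D3 dx (ua n) j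
    - c * dx / 2 * Dp dx (Dm dx (ua n)) j.

(* Main.v *)
Require Import Defs.
From Stdlib Require Import Reals ZArith Lra Psatz Lia.
From Coquelicot Require Import Coquelicot.
Open Scope R_scope.


Definition summ (a : seqZ) : Prop :=
  ex_series (fun k => Rabs (a (Z.of_nat k))) /\
  ex_series (fun k => Rabs (a (- Z.of_nat (S k))%Z)).

Lemma exs_ext (a b : nat -> R) : (forall n, a n = b n) -> ex_series a -> ex_series b.
Proof. intros; exact (ex_series_ext a b H H0). Qed.
Lemma exs_plus (a b : nat -> R) : ex_series a -> ex_series b -> ex_series (fun n => a n + b n).
Proof. intros; exact (ex_series_plus a b H H0). Qed.
Lemma exs_scal (c : R) (a : nat -> R) : ex_series a -> ex_series (fun n => c * a n).
Proof. intros; exact (ex_series_scal_l c a H). Qed.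
Lemma exs_le (a b : nat -> R) : (forall n, Rabs (a n) <= b n) -> ex_series b -> ex_series a.
Proof. intros; exact (ex_series_le a b H H0). Qed.
Lemma exs_abs (a : nat -> R) : ex_series (fun n => Rabs (a n)) -> ex_series a.
Proof. apply ex_series_Rabs. Qed.

Lemma summ_dom (a b : seqZ) : (forall j, Rabs (b j) <= a j) -> summ a -> summ b.
Proof.
  intros H [H1 H2]; split.
  - apply exs_le with (b := fun k => Rabs (a (Z.of_nat k))); auto.
    intros n; rewrite Rabs_Rabsolu; eapply Rle_trans; [apply H|apply Rle_abs].
  - apply exs_le with (b := fun k => Rabs (a (- Z.of_nat (S k))%Z)); auto.
    intros n; rewrite Rabs_Rabsolu; eapply Rle_trans; [apply H|apply Rle_abs].
Qed.

Lemma summ_abs (a : seqZ) : summ a -> summ (fun j => Rabs (a j)).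
Proof.
  intros [H1 H2]; split.
  eapply exs_ext; [|exact H1]; intros; simpl; rewrite Rabs_Rabsolu; reflexivity.
  eapply exs_ext; [|exact H2]; intros; simpl; rewrite Rabs_Rabsolu; reflexivity. Qed.

Lemma summ_domA (a b : seqZ) : (forall j, Rabs (b j) <= Rabs (a j)) -> summ a -> summ b.
Proof. intros H Ha; apply summ_dom with (a := fun j => Rabs (a j)); auto; apply summ_abs; auto. Qed.

Lemma summ_plus (a b : seqZ) : summ a -> summ b -> summ (fun j => a j + b j).
Proof.
  intros [A1 A2] [B1 B2].
  apply summ_dom with (a := fun j => Rabs (a j) + Rabs (b j)).
  - intros; apply Rabs_triang.
  - split.
    + apply exs_le with (b := fun k => Rabs (a (Z.of_nat k)) + Rabs (b (Z.of_nat k))).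
      * intros; cbv beta; rewrite Rabs_Rabsolu, Rabs_pos_eq; [lra| pose proof (Rabs_pos (a (Z.of_nat n))); pose proof (Rabs_pos (b (Z.of_nat n))); lra].
      * apply exs_plus; auto.
    + apply exs_le with (b := fun k => Rabs (a (- Z.of_nat (S k))%Z) + Rabs (b (- Z.of_nat (S k))%Z)).
      * intros; cbv beta; rewrite Rabs_Rabsolu, Rabs_pos_eq; [lra| pose proof (Rabs_pos (a (- Z.of_nat (S n))%Z)); pose proof (Rabs_pos (b (- Z.of_nat (S n))%Z)); lra].
      * apply exs_plus; auto.
Qed.

Lemma summ_scal (c : R) (a : seqZ) : summ a -> summ (fun j => c * a j).
Proof.
  intros [A1 A2]; split.
  - apply exs_le with (b := fun k => Rabs c * Rabs (a (Z.of_nat k))).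
    + intros; rewrite Rabs_Rabsolu, Rabs_mult; lra.
    + apply exs_scal; auto.
  - apply exs_le with (b := fun k => Rabs c * Rabs (a (- Z.of_nat (S k))%Z)).
    + intros; rewrite Rabs_Rabsolu, Rabs_mult; lra.
    + apply exs_scal; auto.
Qed.

Lemma summ_opp (a : seqZ) : summ a -> summ (fun j => - a j).
Proof. intros H; apply summ_dom with (a := fun j => Rabs (a j)).
  intros; rewrite Rabs_Ropp; lra.
  destruct H as [H1 H2]; split.
  eapply exs_ext; [|exact H1]; intros; simpl; rewrite Rabs_Rabsolu; reflexivity.
  eapply exs_ext; [|exact H2]; intros; simpl; rewrite Rabs_Rabsolu; reflexivity. Qed.

Lemma summ_minus (a b : seqZ) : summ a -> summ b -> summ (fun j => a j - b j).
Proof. intros; apply summ_plus; auto; apply summ_opp; auto. Qed.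

Lemma summ_shift1 (a : seqZ) : summ a -> summ (fun j => a (j + 1)%Z).
Proof.
  intros [A1 A2]; split.
  - apply ex_series_incr_1 in A1.
    eapply exs_ext; [|exact A1]. intros n.
    cbv beta; f_equal; f_equal; rewrite ?Nat2Z.inj_succ; lia.
  - assert (H : ex_series (fun k => Rabs (a (- Z.of_nat k)%Z))).
    { apply ex_series_incr_1. eapply exs_ext; [|exact A2]. intros n; simpl. reflexivity. }
    eapply exs_ext; [|exact H]. intros n; cbv beta; f_equal; f_equal; rewrite ?Nat2Z.inj_succ; lia.
Qed.

Lemma summ_shiftm1 (a : seqZ) : summ a -> summ (fun j => a (j - 1)%Z).
Proof.
  intros [A1 A2]; split.
  - apply ex_series_incr_1. 
    eapply exs_ext; [|exact A1]. intros n.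
    cbv beta; f_equal; f_equal; rewrite ?Nat2Z.inj_succ; lia.
  - apply ex_series_incr_1 in A2.
    eapply exs_ext; [|exact A2]. intros n; cbv beta; f_equal; f_equal; rewrite ?Nat2Z.inj_succ; lia.
Qed.

Lemma summ_shift_nat (a : seqZ) (n : nat) : summ a ->
  summ (fun j => a (j + Z.of_nat n)%Z) /\ summ (fun j => a (j - Z.of_nat n)%Z).
Proof.
  induction n; intros H.
  - split; eapply summ_domA; try exact H; intros j; apply Req_le; cbv beta; do 2 f_equal; lia.
  - destruct (IHn H) as [H1 H2]. split.
    + apply summ_shift1 in H1. eapply summ_domA; [|exact H1]. intros j; apply Req_le; cbv beta; do 2 f_equal; lia.
    + apply summ_shiftm1 in H2. eapply summ_domA; [|exact H2]. intros j; apply Req_le; cbv beta; do 2 f_equal; lia.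
Qed.

Lemma summ_shift (a : seqZ) (f : Z -> Z) : summ a -> (forall j, f j = (j + f 0%Z)%Z) ->
  summ (fun j => a (f j)).
Proof.
  intros H Hf. destruct (Z_le_gt_dec 0 (f 0%Z)) as [Hp|Hn].
  - destruct (summ_shift_nat a (Z.to_nat (f 0%Z)) H) as [H1 _].
    eapply summ_domA; [|exact H1]. intros j; apply Req_le; cbv beta; do 2 f_equal; rewrite Hf; lia.
  - destruct (summ_shift_nat a (Z.to_nat (- f 0%Z)) H) as [_ H1].
    eapply summ_domA; [|exact H1]. intros j; apply Req_le; cbv beta; do 2 f_equal; rewrite Hf; lia.
Qed.

Lemma summ_ex (a : seqZ) : summ a -> ex_series (fun k => a (Z.of_nat k)) /\ ex_series (fun k => a (- Z.of_nat (S k))%Z).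
Proof. intros [H1 H2]; split; apply exs_abs; auto. Qed.

Lemma sumZ_plus (a b : seqZ) : summ a -> summ b -> sumZ (fun j => a j + b j) = sumZ a + sumZ b.
Proof.
  intros Ha Hb; apply summ_ex in Ha; apply summ_ex in Hb; destruct Ha, Hb.
  unfold sumZ. rewrite (Series_plus (fun k => a (Z.of_nat k)) (fun k => b (Z.of_nat k))) by auto.
  rewrite (Series_plus (fun k => a (- Z.of_nat (S k))%Z) (fun k => b (- Z.of_nat (S k))%Z)) by auto.
  lra.
Qed.

Lemma sumZ_scal (c : R) (a : seqZ) : sumZ (fun j => c * a j) = c * sumZ a.
Proof. unfold sumZ. rewrite !Series_scal_l. lra. Qed.

Lemma sumZ_opp (a : seqZ) : sumZ (fun j => - a j) = - sumZ a.
Proof. unfold sumZ. rewrite !Series_opp. lra. Qed.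

Lemma sumZ_minus (a b : seqZ) : summ a -> summ b -> sumZ (fun j => a j - b j) = sumZ a - sumZ b.
Proof. intros. unfold Rminus. rewrite sumZ_plus; auto. rewrite sumZ_opp; auto. apply summ_opp; auto. Qed.

Lemma Series_nonneg (a : nat -> R) : ex_series a -> (forall n, 0 <= a n) -> 0 <= Series a.
Proof.
  intros He H.
  assert (Series (fun _ => 0) <= Series a).
  { apply Series_le; auto. intros; split; [lra| auto]. }
  assert (Series (fun _ : nat => 0) = 0).
  { rewrite (Series_ext (fun _ => 0) (fun n => 0 * a n)) by (intros; ring). rewrite Series_scal_l; ring. }
  lra.
Qed.

Lemma Series_le2 (a b : nat -> R) : ex_series a -> ex_series b -> (forall n, a n <= b n) -> Series a <= Series b.
Proof.
  intros Ha Hb H.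
  assert (0 <= Series (fun n => b n - a n)).
  { apply Series_nonneg.
    - apply exs_scal with (c := -1) in Ha.
      apply (exs_plus b (fun n => -1 * a n)) in Hb; auto.
      eapply exs_ext; [|exact Hb]. intros; cbv beta; ring.
    - intros; specialize (H n); lra. }
  rewrite Series_minus in H0 by auto. lra.
Qed.

Lemma sumZ_le (a b : seqZ) : summ a -> summ b -> (forall j, a j <= b j) -> sumZ a <= sumZ b.
Proof.
  intros Ha Hb H; apply summ_ex in Ha; apply summ_ex in Hb; destruct Ha, Hb.
  unfold sumZ. apply Rplus_le_compat; apply Series_le2; auto.
Qed.

Lemma sumZ_nonneg (a : seqZ) : summ a -> (forall j, 0 <= a j) -> 0 <= sumZ a.
Proof.
  intros Ha H; apply summ_ex in Ha; destruct Ha.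
  unfold sumZ. pose proof (Series_nonneg _ H0 (fun n => H _)). pose proof (Series_nonneg _ H1 (fun n => H _)). lra.
Qed.

Lemma sumZ_shift1 (a : seqZ) : summ a -> sumZ (fun j => a (j + 1)%Z) = sumZ a.
Proof.
  intros Ha; apply summ_ex in Ha; destruct Ha as [A1 A2]. unfold sumZ.
  rewrite (Series_incr_1 (fun k => a (Z.of_nat k))) by auto.
  assert (H : ex_series (fun k => a (- Z.of_nat k)%Z)).
  { apply ex_series_incr_1. eapply exs_ext; [|exact A2]. intros n; reflexivity. }
  rewrite (Series_ext (fun k => a (Z.of_nat k + 1)%Z) (fun k => a (Z.of_nat (S k)))).
  rewrite (Series_ext (fun k => a (- Z.of_nat (S k) + 1)%Z) (fun k => a (- Z.of_nat k)%Z)).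
  rewrite (Series_incr_1 (fun k => a (- Z.of_nat k)%Z)) by auto.
  simpl. ring.
  intros n; f_equal; rewrite ?Nat2Z.inj_succ; lia.
  intros n; f_equal; rewrite ?Nat2Z.inj_succ; lia.
Qed.

Lemma sum_le_tele (A B T : seqZ) : summ A -> summ B -> summ T ->
  (forall j, A j <= B j + (T (j + 1)%Z - T j)) -> sumZ A <= sumZ B.
Proof.
  intros HA HB HT H.
  assert (HT1 := summ_shift1 T HT).
  eapply Rle_trans. apply sumZ_le; [exact HA| |exact H].
  apply summ_plus; auto; apply summ_minus; auto.
  rewrite sumZ_plus, sumZ_minus, sumZ_shift1; auto. lra.
  apply summ_minus; auto.
Qed.

Lemma sum_eq_tele (A B T : seqZ) : summ A -> summ B -> summ T ->
  (forall j, A j = B j + (T (j + 1)%Z - T j)) -> sumZ A = sumZ B.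
Proof.
  intros HA HB HT H. apply Rle_antisym.
  apply (sum_le_tele A B T); auto; intros; rewrite H; lra.
  apply (sum_le_tele B A (fun j => - T j)); auto. apply summ_opp; auto. intros; rewrite H; lra.
Qed.

Definition L2 (a : seqZ) : Prop := summ (fun j => a j ^ 2).
Definition bnd (a : seqZ) : Prop := exists M, forall j, Rabs (a j) <= M.

Lemma L2_of_l2Z (a : seqZ) : l2Z a -> L2 a.
Proof.
  intros [H1 H2]; split.
  eapply exs_ext; [|exact H1]; intros; cbv beta; rewrite Rabs_pos_eq; auto; apply pow2_ge_0.
  eapply exs_ext; [|exact H2]; intros; cbv beta; rewrite Rabs_pos_eq; auto; apply pow2_ge_0.
Qed.

Lemma Series_ge_term (a : nat -> R) (n : nat) : ex_series a -> (forall k, 0 <= a k) -> a n <= Series a.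
Proof.
  intros He H.
  apply Rle_trans with (Series (fun k => if Nat.eqb k n then a n else 0)).
  - rewrite (Series_incr_n_aux (fun k => if Nat.eqb k n then a n else 0) n).
    rewrite Series_incr_1. rewrite Nat.add_0_r, Nat.eqb_refl.
    rewrite (Series_ext _ (fun _ => 0)). 
    rewrite (Series_ext (fun _ => 0) (fun k => 0 * a k)) by (intros; ring). rewrite Series_scal_l; lra.
    intros k. replace (n + S k)%nat with (S (n + k)) by lia. destruct (Nat.eqb_spec (S (n+k)) n); [lia|auto].
    apply exs_le with (b := fun k => a (n + k)%nat).
    intros k; destruct (Nat.eqb_spec (n+k) n). rewrite Rabs_pos_eq by auto; subst; rewrite e; lra. rewrite Rabs_R0; auto.
    apply (ex_series_incr_n a n); auto.
    intros k Hk. destruct (Nat.eqb_spec k n); [lia|auto].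
  - apply Series_le2; auto.
    apply exs_le with (b := a). intros k; destruct (Nat.eqb_spec k n). subst; rewrite Rabs_pos_eq; auto; lra. rewrite Rabs_R0; auto. auto.
    intros k; destruct (Nat.eqb_spec k n); subst; auto; lra.
Qed.

Lemma L2_bnd (a : seqZ) : L2 a -> bnd a.
Proof.
  intros [H1 H2].
  set (M := Series (fun k => Rabs (a (Z.of_nat k) ^ 2)) + Series (fun k => Rabs (a (- Z.of_nat (S k))%Z ^ 2))).
  assert (P1 := Series_nonneg _ H1 (fun k => Rabs_pos _)).
  assert (P2 := Series_nonneg _ H2 (fun k => Rabs_pos _)).
  exists (sqrt M). intros j.
  rewrite <- sqrt_Rsqr_abs. apply sqrt_le_1_alt.
  unfold Rsqr. replace (a j * a j) with (Rabs (a j ^ 2)) by (rewrite Rabs_pos_eq; [ring| apply pow2_ge_0]).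
  destruct (Z_le_gt_dec 0 j).
  - pose proof (Series_ge_term _ (Z.to_nat j) H1 (fun k => Rabs_pos _)). cbv beta in H.
    rewrite Z2Nat.id in H by lia. unfold M; lra.
  - pose proof (Series_ge_term _ (Z.to_nat (- j - 1)) H2 (fun k => Rabs_pos _)). cbv beta in H.
    replace (- Z.of_nat (S (Z.to_nat (- j - 1))))%Z with j in H by (rewrite Nat2Z.inj_succ, Z2Nat.id; lia).
    unfold M; lra.
Qed.

Lemma bnd_const (c : R) : bnd (fun _ => c).
Proof. exists (Rabs c); intros; lra. Qed.
Lemma bnd_plus (a b : seqZ) : bnd a -> bnd b -> bnd (fun j => a j + b j).
Proof. intros [M HM] [N HN]; exists (M + N); intros j; eapply Rle_trans; [apply Rabs_triang|]; specialize (HM j); specialize (HN j); lra. Qed.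
Lemma bnd_opp (a : seqZ) : bnd a -> bnd (fun j => - a j).
Proof. intros [M HM]; exists M; intros j; rewrite Rabs_Ropp; auto. Qed.
Lemma bnd_minus (a b : seqZ) : bnd a -> bnd b -> bnd (fun j => a j - b j).
Proof. intros; apply bnd_plus; auto; apply bnd_opp; auto. Qed.
Lemma bnd_mul (a b : seqZ) : bnd a -> bnd b -> bnd (fun j => a j * b j).
Proof. intros [M HM] [N HN]; exists (M * N); intros j; rewrite Rabs_mult.
  specialize (HM j); specialize (HN j). pose proof (Rabs_pos (a j)); pose proof (Rabs_pos (b j)).
  apply Rmult_le_compat; auto. Qed.
Lemma bnd_pow (a : seqZ) (n : nat) : bnd a -> bnd (fun j => a j ^ n).
Proof. intros H; induction n. exists 1; intros; simpl; rewrite Rabs_R1; lra. simpl. apply (bnd_mul a (fun j => a j ^ n)); auto. Qed.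
Lemma bnd_div (a b : seqZ) : bnd a -> bnd (fun j => / b j) -> bnd (fun j => a j / b j).
Proof. intros; unfold Rdiv; apply bnd_mul; auto. Qed.
Lemma bnd_shift (a : seqZ) (f : Z -> Z) : bnd a -> bnd (fun j => a (f j)).
Proof. intros [M HM]; exists M; intros; auto. Qed.

Lemma L2_dom (a b : seqZ) (M : R) : (forall j, b j ^ 2 <= M * a j ^ 2) -> L2 a -> L2 b.
Proof.
  intros H Ha. apply summ_dom with (a := fun j => Rabs M * a j ^ 2).
  intros j; cbv beta; rewrite Rabs_pos_eq by apply pow2_ge_0. eapply Rle_trans; [apply H|].
  apply Rmult_le_compat_r. apply pow2_ge_0. apply Rle_abs.
  apply summ_scal; auto.
Qed.

Lemma L2_plus (a b : seqZ) : L2 a -> L2 b -> L2 (fun j => a j + b j).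
Proof.
  intros Ha Hb. apply summ_dom with (a := fun j => 2 * a j ^ 2 + 2 * b j ^ 2).
  intros j; cbv beta; rewrite Rabs_pos_eq by apply pow2_ge_0. pose proof (pow2_ge_0 (a j - b j)); nra.
  apply summ_plus; apply summ_scal; auto.
Qed.
Lemma L2_opp (a : seqZ) : L2 a -> L2 (fun j => - a j).
Proof. apply L2_dom with (M := 1); intros; nra. Qed.
Lemma L2_minus (a b : seqZ) : L2 a -> L2 b -> L2 (fun j => a j - b j).
Proof. intros; apply L2_plus; auto; apply L2_opp; auto. Qed.
Lemma L2_mulr (a b : seqZ) : L2 a -> bnd b -> L2 (fun j => a j * b j).
Proof. intros Ha [M HM]. apply L2_dom with (M := M ^ 2) (a := a); auto.
  intros j; specialize (HM j). rewrite Rpow_mult_distr. rewrite Rmult_comm. apply Rmult_le_compat_r. apply pow2_ge_0.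
  rewrite <- (pow2_abs (b j)). pose proof (Rabs_pos (b j)). apply pow_incr; lra. Qed.
Lemma L2_mull (a b : seqZ) : bnd a -> L2 b -> L2 (fun j => a j * b j).
Proof. intros Ha Hb. eapply L2_dom with (M := 1); [|apply (L2_mulr b a Hb Ha)]. intros; cbv beta; rewrite Rmult_comm; lra. Qed.
Lemma L2_div (a b : seqZ) : L2 a -> bnd (fun j => / b j) -> L2 (fun j => a j / b j).
Proof. intros; unfold Rdiv; apply L2_mulr; auto. Qed.
Lemma L2_pow (a : seqZ) (n : nat) : L2 a -> L2 (fun j => a j ^ S n).
Proof. intros H. simpl. apply (L2_mulr a (fun j => a j ^ n)); auto. apply bnd_pow, L2_bnd; auto. Qed.
Lemma L2_shift (a : seqZ) (f : Z -> Z) : L2 a -> (forall j, f j = (j + f 0%Z)%Z) -> L2 (fun j => a (f j)).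
Proof. intros; unfold L2; apply (summ_shift (fun j => a j ^ 2) f); auto. Qed.

Lemma summ_mul (a b : seqZ) : L2 a -> L2 b -> summ (fun j => a j * b j).
Proof.
  intros Ha Hb. apply summ_dom with (a := fun j => a j ^ 2 + b j ^ 2).
  intros j; cbv beta. apply Rabs_le. pose proof (pow2_ge_0 (a j - b j)); pose proof (pow2_ge_0 (a j + b j)); split; nra.
  apply summ_plus; auto.
Qed.
Lemma summ_mul_bndl (a b : seqZ) : bnd a -> summ b -> summ (fun j => a j * b j).
Proof. intros [M HM] Hb. apply summ_domA with (a := fun j => M * b j).
  intros j; rewrite !Rabs_mult. specialize (HM j). apply Rmult_le_compat_r. apply Rabs_pos. eapply Rle_trans; [exact HM|apply Rle_abs].
  apply summ_scal; auto. Qed.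
Lemma summ_mul_bndr (a b : seqZ) : summ a -> bnd b -> summ (fun j => a j * b j).
Proof. intros Ha Hb. eapply summ_domA; [|apply (summ_mul_bndl b a Hb Ha)]. intros; rewrite Rmult_comm; lra. Qed.
Lemma summ_div (a b : seqZ) : summ a -> bnd (fun j => / b j) -> summ (fun j => a j / b j).
Proof. intros; unfold Rdiv; apply summ_mul_bndr; auto. Qed.
Lemma summ_sq (a : seqZ) : L2 a -> summ (fun j => a j ^ 2).
Proof. auto. Qed.
Lemma summ_pow (a : seqZ) (n : nat) : L2 a -> summ (fun j => a j ^ S (S n)).
Proof. intros H. apply summ_domA with (a := fun j => a j ^ 2 * a j ^ n).
  intros; apply Req_le; cbv beta; f_equal; rewrite <- pow_add; reflexivity. apply summ_mul_bndr; auto. apply bnd_pow, L2_bnd; auto. Qed.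
Lemma summ_shift' (a : seqZ) (f : Z -> Z) : summ a -> (forall j, f j = (j + f 0%Z)%Z) -> summ (fun j => a (f j)).
Proof. apply summ_shift. Qed.

Lemma L2_Dp (h : R) (a : seqZ) : L2 a -> L2 (Dp h a).
Proof. intros; unfold Dp. apply (L2_div (fun j => a (j+1)%Z - a j) (fun _ => h)); [|apply bnd_const].
  apply L2_minus; auto. apply (L2_shift a (fun j => (j+1)%Z)); auto; intros; lia. Qed.
Lemma L2_Dm (h : R) (a : seqZ) : L2 a -> L2 (Dm h a).
Proof. intros; unfold Dm. apply (L2_div (fun j => a j - a (j-1)%Z) (fun _ => h)); [|apply bnd_const].
  apply L2_minus; auto. apply (L2_shift a (fun j => (j-1)%Z)); auto; intros; lia. Qed.
Lemma L2_Dc (h : R) (a : seqZ) : L2 a -> L2 (Dc h a).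
Proof. intros; unfold Dc. apply (L2_div (fun j => Dp h a j + Dm h a j) (fun _ => 2)); [|apply bnd_const].
  apply L2_plus; [apply L2_Dp|apply L2_Dm]; auto. Qed.
Lemma L2_D3 (h : R) (a : seqZ) : L2 a -> L2 (D3 h a).
Proof. intros; unfold D3; apply L2_Dp, L2_Dp, L2_Dm; auto. Qed.
Lemma L2_Aop (al t h : R) (a : seqZ) : L2 a -> L2 (Aop al t h a).
Proof. intros; unfold Aop. apply L2_plus; auto. apply (L2_mull (fun _ => al * t) (D3 h a)). apply bnd_const. apply L2_D3; auto. Qed.
Create HintDb l2db.
#[export] Hint Resolve L2_Dp L2_Dm L2_Dc L2_D3 L2_Aop : l2db.

Ltac zshift := intros; cbv beta; simpl; lia.

Ltac bndt :=
  cbv beta;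
  match goal with
  | |- bnd (fun _ => ?c) => apply bnd_const
  | |- bnd (fun j => @?A j + @?B j) => apply (bnd_plus A B); bndt
  | |- bnd (fun j => @?A j - @?B j) => apply (bnd_minus A B); bndt
  | |- bnd (fun j => - @?A j) => apply (bnd_opp A); bndt
  | |- bnd (fun j => @?A j * @?B j) => apply (bnd_mul A B); bndt
  | |- bnd (fun j => @?A j / @?B j) => apply (bnd_div A B); bndt
  | |- bnd (fun j => @?A j ^ ?n) => apply (bnd_pow A n); bndt
  | |- bnd (fun j => ?F (@?f j)) => apply (bnd_shift F f); bndt
  | |- bnd ?F => first [assumption | apply L2_bnd; l2t]
  end
with l2t :=
  cbv beta;
  match goal with
  | |- L2 (fun j => @?A j + @?B j) => apply (L2_plus A B); l2t
  | |- L2 (fun j => @?A j - @?B j) => apply (L2_minus A B); l2t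
  | |- L2 (fun j => - @?A j) => apply (L2_opp A); l2t
  | |- L2 (fun j => @?A j * @?B j) => first [apply (L2_mulr A B); [l2t|bndt] | apply (L2_mull A B); [bndt|l2t]]
  | |- L2 (fun j => @?A j / @?B j) => apply (L2_div A B); [l2t|bndt]
  | |- L2 (fun j => @?A j ^ S ?n) => apply (L2_pow A n); l2t
  | |- L2 (fun j => ?F (@?f j)) => apply (L2_shift F f); [l2t|zshift]
  | |- L2 (Dc ?h ?X) => apply (L2_Dc h X); l2t
  | |- L2 (Dp ?h ?X) => apply (L2_Dp h X); l2t
  | |- L2 (Dm ?h ?X) => apply (L2_Dm h X); l2t
  | |- L2 (D3 ?h ?X) => apply (L2_D3 h X); l2t
  | |- L2 (Aop ?al ?t ?h ?X) => apply (L2_Aop al t h X); l2t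
  | |- L2 ?F => first [assumption | solve [eauto with l2db]]
  end.

Ltac smt :=
  cbv beta;
  match goal with
  | |- summ (fun j => @?A j + @?B j) => apply (summ_plus A B); smt
  | |- summ (fun j => @?A j - @?B j) => apply (summ_minus A B); smt
  | |- summ (fun j => - @?A j) => apply (summ_opp A); smt
  | |- summ (fun j => @?A j ^ 2) => apply (summ_sq A); l2t
  | |- summ (fun j => @?A j ^ S (S ?n)) => apply (summ_pow A n); l2t
  | |- summ (fun j => @?A j * @?B j) =>
      first [apply (summ_mul A B); l2t | apply (summ_mul_bndl A B); [bndt|smt] | apply (summ_mul_bndr A B); [smt|bndt]]
  | |- summ (fun j => @?A j / @?B j) => apply (summ_div A B); [smt|bndt]
  | |- summ (fun j => ?F (@?f j)) => apply (summ_shift' F f); [smt|zshift]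
  | |- summ ?F => assumption
  end.

Lemma linf_bound (a : seqZ) : bnd a -> forall j, Rabs (a j) <= linf a.
Proof.
  intros [M HM] j. unfold linf.
  destruct (Lub_Rbar_correct (fun r => exists j : Z, r = Rabs (a j))) as [Hub Hlub].
  assert (H1 : Rbar_le (Rabs (a j)) (Lub_Rbar (fun r => exists j : Z, r = Rabs (a j)))).
  { apply Hub. exists j; auto. }
  assert (H2 : Rbar_le (Lub_Rbar (fun r => exists j : Z, r = Rabs (a j))) M).
  { apply Hlub. intros x [k ->]. simpl. auto. }
  destruct (Lub_Rbar (fun r => exists j : Z, r = Rabs (a j))); simpl in *; try contradiction; auto.
Qed.

Lemma linf_nonneg (a : seqZ) : bnd a -> 0 <= linf a.
Proof. intros H; eapply Rle_trans; [apply (Rabs_pos (a 0%Z))| apply linf_bound; auto]. Qed.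


Lemma Rabs_le_between (x M : R) : Rabs x <= M -> -M <= x <= M.
Proof. intros H; pose proof (Rle_abs x); pose proof (Rle_abs (-x)); rewrite Rabs_Ropp in *; lra. Qed.

Lemma R1 (d x y Up : R) : Rabs d <= Up -> - d * x * y <= Up * (x ^ 2 + y ^ 2) / 2.
Proof.
  intros H. pose proof (pow2_ge_0 (x + y)); pose proof (pow2_ge_0 (x - y)).
  apply Rabs_le_between in H. 
  assert (0 <= (Up + d) * (x - y) ^ 2) by (apply Rmult_le_pos; lra).
  assert (0 <= (Up - d) * (x + y) ^ 2) by (apply Rmult_le_pos; lra).
  nra.
Qed.

Lemma R_amgm (Up X Y : R) (sigma : nat) : 0 <= Up -> (sigma = 0%nat \/ sigma = 1%nat) ->
  2 * Up * Rabs X * Rabs Y <= Up ^ sigma * X ^ 2 + Up ^ (2 - sigma) * Y ^ 2.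
Proof.
  intros HU [-> | ->];
  rewrite <- (pow2_abs X), <- (pow2_abs Y); pose proof (Rabs_pos X); pose proof (Rabs_pos Y).
  - change (Up ^ 0) with 1. change (Up ^ (2 - 0)) with (Up ^ 2).
    pose proof (pow2_ge_0 (Rabs X - Up * Rabs Y)). nra.
  - change (Up ^ 1) with (Up * 1). change (Up ^ (2 - 1)) with (Up ^ 1). change (Up ^ 1) with (Up * 1).
    pose proof (pow2_ge_0 (Rabs X - Rabs Y)). assert (0 <= Up * (Rabs X - Rabs Y)^2) by (apply Rmult_le_pos; lra). nra.
Qed.

Lemma R_cube (a b E : R) : Rabs a <= E -> Rabs b <= E ->
  Rabs ((a + b) ^ 2 * (a - b)) <= 4 / 3 * E * (a ^ 2 + b ^ 2).
Proof.
  intros Ha Hb.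
  set (s := a + b). set (d := a - b).
  assert (Hsd : Rabs s + Rabs d <= 2 * E).
  { unfold s, d. apply Rabs_le_between in Ha. apply Rabs_le_between in Hb.
    destruct (Rcase_abs (a+b)), (Rcase_abs (a-b)); [rewrite (Rabs_left (a+b)), (Rabs_left (a-b)) by lra|rewrite (Rabs_left (a+b)), (Rabs_right (a-b)) by lra|rewrite (Rabs_right (a+b)), (Rabs_left (a-b)) by lra|rewrite (Rabs_right (a+b)), (Rabs_right (a-b)) by lra]; lra. }
  replace (a ^ 2 + b ^ 2) with ((s ^ 2 + d ^ 2) / 2) by (unfold s, d; field).
  rewrite Rabs_mult, <- RPow_abs.
  set (S := Rabs s) in *. set (D := Rabs d) in *.
  replace (Rabs s) with S by auto. 
  assert (0 <= S) by apply Rabs_pos. assert (0 <= D) by apply Rabs_pos.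
  replace (Rabs d) with D by auto. rewrite <- (pow2_abs s). fold S.
  replace (d ^ 2) with (D ^ 2) by (unfold D; apply pow2_abs).
  (* goal: S^2 * D <= 4/3 E (S^2 + D^2)/2 with S + D <= 2E *)
  destruct (Rle_dec D (2 / 3 * E)).
  - assert (0 <= S ^ 2) by apply pow2_ge_0. assert (0 <= D^2) by apply pow2_ge_0.
    assert (S ^ 2 * D <= S ^ 2 * (2/3 * E)) by (apply Rmult_le_compat_l; auto). nra.
  - assert (HS : S <= 2 * E - D) by lra.
    assert (S ^ 2 <= (2 * E - D) ^ 2) by (apply pow_incr; lra).
    assert (S ^ 2 * (D - 2/3 * E) <= (2 * E - D) ^ 2 * (D - 2/3*E)) by (apply Rmult_le_compat_r; lra).
    assert (0 <= (2*E - D)^2 * (D - 2/3*E) ) by (apply Rmult_le_pos; [apply pow2_ge_0|lra]).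
    (* need (2E-D)^2 * D <= 2/3 E ((2E-D)^2 + D^2) for D in [2E/3, 2E] *)
    assert (HD2 : D <= 2 * E) by lra.
    assert (0 <= (2*E - D) * (D - 2/3*E) * (2*E)) by (apply Rmult_le_pos; [apply Rmult_le_pos|]; lra).
    pose proof (pow2_ge_0 (D - E)).
    nra.
Qed.

Lemma R_GN (e0 g p q E : R) : Rabs e0 <= E ->
  - e0 * g * (p ^ 2 + p * q + q ^ 2) <= 9 / 2 * E ^ 2 * g ^ 2 + (p ^ 4 + q ^ 4) / 4.
Proof.
  intros He.
  assert (HQ : Rabs (p ^ 2 + p * q + q ^ 2) <= 3 / 2 * (p ^ 2 + q ^ 2)).
  { pose proof (pow2_ge_0 (p+q)); pose proof (pow2_ge_0 (p - q)). apply Rabs_le; split; nra. }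
  assert (H1 : - e0 * g * (p ^ 2 + p * q + q ^ 2) <= E * Rabs g * (3 / 2 * (p ^ 2 + q ^ 2))).
  { eapply Rle_trans; [apply Rle_abs|]. rewrite !Rabs_mult, Rabs_Ropp.
    apply Rmult_le_compat; try apply Rabs_pos. apply Rmult_le_pos; apply Rabs_pos.
    apply Rmult_le_compat_r; auto; apply Rabs_pos. auto. }
  pose proof (pow2_ge_0 (3 * E * Rabs g - (p^2+q^2)/2)).
  pose proof (pow2_ge_0 (p^2 - q^2)).
  rewrite <- (pow2_abs g) . nra.
Qed.

Lemma R_psi (x y z : R) : ((x + y) / 2) ^ 2 * ((x + z) / 2) ^ 2 <= (2 * x ^ 4 + y ^ 4 + z ^ 4) / 4.
Proof.
  set (A := ((x + y) / 2) ^ 2). set (B := ((x + z) / 2) ^ 2).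
  assert (HA : A ^ 2 <= (x ^ 4 + y ^ 4) / 2).
  { unfold A. pose proof (pow2_ge_0 (x - y)). pose proof (pow2_ge_0 (x + y)). pose proof (pow2_ge_0 (x^2 - y^2)).
    pose proof (pow2_ge_0 ((x-y)*(x+y))). nra. }
  assert (HB : B ^ 2 <= (x ^ 4 + z ^ 4) / 2).
  { unfold B. pose proof (pow2_ge_0 (x - z)). pose proof (pow2_ge_0 (x + z)). pose proof (pow2_ge_0 (x^2 - z^2)).
    pose proof (pow2_ge_0 ((x-z)*(x+z))). nra. }
  pose proof (pow2_ge_0 (A - B)). nra.
Qed.

Lemma abs3 (X Y Z A B C : R) : Rabs X <= A -> Rabs Y <= B -> Rabs Z <= C -> X * Y * Z <= A * B * C.
Proof.
  intros H1 H2 H3. eapply Rle_trans; [apply Rle_abs|]. rewrite !Rabs_mult.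
  pose proof (Rabs_pos X); pose proof (Rabs_pos Y); pose proof (Rabs_pos Z).
  apply Rmult_le_compat; try apply Rmult_le_pos; auto. apply Rmult_le_compat; auto.
Qed.

Lemma sq_le_of_abs (X A : R) : Rabs X <= A -> X ^ 2 <= A ^ 2.
Proof. intros H. rewrite <- (pow2_abs X). pose proof (Rabs_pos X). apply pow_incr; lra. Qed.

Lemma R_J4 (a b x y h U E Up Kd : R) : 0 < h -> Rabs x <= U -> Rabs y <= U -> Rabs a <= E -> Rabs b <= E ->
  Rabs ((x - y) / (2 * h)) <= Up -> ((x - y) / (2 * h)) ^ 2 <= Kd ->
  ((x * a - y * b + (a ^ 2 - b ^ 2) / 2) / (2 * h)) ^ 2 <=
  (U + E) ^ 2 * ((a - b) / (2 * h)) ^ 2 + (U * Up / h + 2 / 3 * Up * E / h + Kd) * (a ^ 2 + b ^ 2) / 2.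
Proof.
  intros Hh Hx Hy Ha Hb Hdu Hkd.
  set (ih := / h). assert (Hih : 0 < ih) by (apply Rinv_0_lt_compat; auto).
  set (D := (a - b) / (2 * h)). set (du := (x - y) / (2 * h)). set (m := (a + b) / 2). set (ub := (x + y) / 2).
  assert (Hid : (x * a - y * b + (a ^ 2 - b ^ 2) / 2) / (2 * h) = (ub + m) * D + m * du).
  { unfold D, du, m, ub. field. lra. }
  rewrite Hid.
  replace (((ub + m) * D + m * du) ^ 2) with ((ub + m) ^ 2 * D ^ 2 + 2 * ub * (m * D) * du + 2 * (m ^ 2 * D) * du + m ^ 2 * du ^ 2) by ring.
  apply Rabs_le_between in Hx; apply Rabs_le_between in Hy; apply Rabs_le_between in Ha; apply Rabs_le_between in Hb.
  assert (HB : (ub + m) ^ 2 <= (U + E) ^ 2).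
  { apply sq_le_of_abs. unfold ub, m. apply Rabs_le; lra. }
  assert (HT1 : (ub + m) ^ 2 * D ^ 2 <= (U + E) ^ 2 * D ^ 2) by (apply Rmult_le_compat_r; [apply pow2_ge_0|auto]).
  assert (HmD : Rabs (m * D) <= (a ^ 2 + b ^ 2) * ih / 4).
  { replace (m * D) with ((a ^ 2 - b ^ 2) * ih / 4) by (unfold m, D, ih; field; lra).
    assert (0 <= a ^ 2 * ih) by (apply Rmult_le_pos; [apply pow2_ge_0|lra]).
    assert (0 <= b ^ 2 * ih) by (apply Rmult_le_pos; [apply pow2_ge_0|lra]).
    apply Rabs_le; split; lra. }
  assert (HT2 : ub * (m * D) * du <= U * ((a ^ 2 + b ^ 2) * ih / 4) * Up).
  { apply abs3; auto. unfold ub; apply Rabs_le; lra. }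
  assert (Hm2D : Rabs (m ^ 2 * D) <= 4 / 3 * E * (a ^ 2 + b ^ 2) * ih / 8).
  { replace (m ^ 2 * D) with (((a + b) ^ 2 * (a - b)) * ih / 8) by (unfold m, D, ih; field; lra).
    unfold Rdiv. rewrite Rabs_mult, Rabs_mult. rewrite (Rabs_pos_eq ih) by lra. rewrite (Rabs_pos_eq (/8)) by lra.
    apply Rmult_le_compat_r; [lra|]. apply Rmult_le_compat_r; [lra|].
    apply R_cube; apply Rabs_le; lra. }
  assert (HT3 : 1 * (m ^ 2 * D) * du <= 1 * (4 / 3 * E * (a ^ 2 + b ^ 2) * ih / 8) * Up).
  { apply abs3; auto. rewrite Rabs_R1; lra. }
  assert (Hm2 : m ^ 2 <= (a ^ 2 + b ^ 2) / 2).
  { unfold m. pose proof (pow2_ge_0 (a - b)). nra. }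
  assert (HT4 : m ^ 2 * du ^ 2 <= (a ^ 2 + b ^ 2) / 2 * Kd).
  { apply Rmult_le_compat; auto; try apply pow2_ge_0. }
  unfold ih in *. unfold Rdiv in *. nra.
Qed.

Lemma amgm_h (W ep h : R) : 0 < h -> 2 * W * ep <= / h * ep ^ 2 + h * W ^ 2.
Proof.
  intros Hh. assert (0 <= h * (W - / h * ep) ^ 2) by (apply Rmult_le_pos; [lra|apply pow2_ge_0]).
  replace (/ h * ep ^ 2 + h * W ^ 2) with (2 * W * ep + h * (W - / h * ep) ^ 2) by (field; lra). lra.
Qed.

Lemma R_J5 (a b e0 x y ep h c U E : R) : 0 < h -> Rabs x <= U -> Rabs y <= U -> Rabs a <= E -> Rabs b <= E ->
  2 * ((x * a - y * b + (a ^ 2 - b ^ 2) / 2) / (2 * h)) * ep - c * h * ((a - 2 * e0 + b) / h ^ 2) * ep <=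
  4 / h * ep ^ 2 + h * E ^ 2 * ((a - b) / (2 * h)) ^ 2 + (U ^ 2 + 2 * c ^ 2) / h * e0 ^ 2
  + (U ^ 2 + c ^ 2) / (2 * h) * (a ^ 2 - 2 * e0 ^ 2 + b ^ 2).
Proof.
  intros Hh Hx Hy Ha Hb.
  set (Wu := (x * a - y * b) / (2 * h)). set (D := (a - b) / (2 * h)). set (m := (a + b) / 2).
  set (q := - (c / 2) * ((a - 2 * e0 + b) / h)).
  assert (Hid : 2 * ((x * a - y * b + (a ^ 2 - b ^ 2) / 2) / (2 * h)) * ep - c * h * ((a - 2 * e0 + b) / h ^ 2) * ep
     = 2 * Wu * ep + 2 * (m * D) * ep + 2 * q * ep) by (unfold Wu, D, m, q; field; lra).
  rewrite Hid.
  pose proof (amgm_h Wu ep h Hh). pose proof (amgm_h (m * D) ep h Hh).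
  assert (Hq : 2 * q * ep <= 2 / h * ep ^ 2 + h / 2 * q ^ 2).
  { pose proof (amgm_h q ep (h / 2) ltac:(lra)). replace (/ (h / 2)) with (2 / h) in H1 by (field; lra).
    replace (h / 2 * q ^ 2) with (h / 2 * q ^ 2) by auto. lra. }
  apply Rabs_le_between in Hx; apply Rabs_le_between in Hy; apply Rabs_le_between in Ha; apply Rabs_le_between in Hb.
  assert (HWu : h * Wu ^ 2 <= U ^ 2 * (a ^ 2 + b ^ 2) / (2 * h)).
  { replace (h * Wu ^ 2) with ((x * a - y * b) ^ 2 / (4 * h)) by (unfold Wu; field; lra).
    assert (Hxy : (x * a - y * b) ^ 2 <= 2 * U ^ 2 * (a ^ 2 + b ^ 2)).
    { pose proof (pow2_ge_0 (x * a + y * b)).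
      assert (x ^ 2 <= U ^ 2) by (apply sq_le_of_abs; apply Rabs_le; lra).
      assert (y ^ 2 <= U ^ 2) by (apply sq_le_of_abs; apply Rabs_le; lra).
      assert (x ^ 2 * a ^ 2 <= U ^ 2 * a ^ 2) by (apply Rmult_le_compat_r; [apply pow2_ge_0|lra]).
      assert (y ^ 2 * b ^ 2 <= U ^ 2 * b ^ 2) by (apply Rmult_le_compat_r; [apply pow2_ge_0|lra]).
      nra. }
    replace (U ^ 2 * (a ^ 2 + b ^ 2) / (2 * h)) with (2 * U ^ 2 * (a ^ 2 + b ^ 2) / (4 * h)) by (field; lra).
    unfold Rdiv; apply Rmult_le_compat_r; auto. left; apply Rinv_0_lt_compat; lra. }
  assert (HmD : h * (m * D) ^ 2 <= h * E ^ 2 * D ^ 2).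
  { replace (h * (m * D) ^ 2) with (h * D ^ 2 * m ^ 2) by ring. replace (h * E ^ 2 * D ^ 2) with (h * D ^ 2 * E ^ 2) by ring.
    apply Rmult_le_compat_l. apply Rmult_le_pos; [lra|apply pow2_ge_0].
    apply sq_le_of_abs. unfold m; apply Rabs_le; lra. }
  assert (Hqq : h / 2 * q ^ 2 <= c ^ 2 * (a ^ 2 + 2 * e0 ^ 2 + b ^ 2) / (2 * h)).
  { replace (h / 2 * q ^ 2) with (c ^ 2 * (a - 2 * e0 + b) ^ 2 / (8 * h)) by (unfold q; field; lra).
    assert ((a - 2 * e0 + b) ^ 2 <= 4 * (a ^ 2 + 2 * e0 ^ 2 + b ^ 2)).
    { pose proof (pow2_ge_0 (a - b)); pose proof (pow2_ge_0 (a + e0)); pose proof (pow2_ge_0 (b + e0)). nra. }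
    assert (0 <= c ^ 2) by apply pow2_ge_0.
    replace (c ^ 2 * (a ^ 2 + 2 * e0 ^ 2 + b ^ 2) / (2 * h)) with (c ^ 2 * (4 * (a ^ 2 + 2 * e0 ^ 2 + b ^ 2)) / (8 * h)) by (field; lra).
    unfold Rdiv; apply Rmult_le_compat_r. left; apply Rinv_0_lt_compat; lra. apply Rmult_le_compat_l; auto. }
  assert (Hfin : U ^ 2 * (a ^ 2 + b ^ 2) / (2 * h) + c ^ 2 * (a ^ 2 + 2 * e0 ^ 2 + b ^ 2) / (2 * h) =
     (U ^ 2 + 2 * c ^ 2) / h * e0 ^ 2 + (U ^ 2 + c ^ 2) / (2 * h) * (a ^ 2 - 2 * e0 ^ 2 + b ^ 2)) by (field; lra).
  assert (H4 : / h * ep ^ 2 + / h * ep ^ 2 + 2 / h * ep ^ 2 = 4 / h * ep ^ 2) by (field; lra).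
  lra.
Qed.


Ltac zn_step :=
  match goal with
  | |- context [ (?x + ?a + ?b)%Z ] =>
       let c := eval compute in (a + b)%Z in replace (x + a + b)%Z with (x + c)%Z by ring
  | |- context [ (?x + ?a - ?b)%Z ] =>
       let c := eval compute in (a - b)%Z in replace (x + a - b)%Z with (x + c)%Z by ring
  | |- context [ (?x - ?a + ?b)%Z ] =>
       let c := eval compute in (b - a)%Z in replace (x - a + b)%Z with (x + c)%Z by ring
  | |- context [ (?x - ?a - ?b)%Z ] =>
       let c := eval compute in (- a - b)%Z in replace (x - a - b)%Z with (x + c)%Z by ring
  | |- context [ (?x - ?a)%Z ] =>
       let c := eval compute in (- a)%Z in replace (x - a)%Z with (x + c)%Z by ring
  | |- context [ (?x + 0)%Z ] => replace (x + 0)%Z with x by ring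
  end.
Ltac zn := repeat zn_step.
Ltac unf := unfold Aop in *; unfold D3 in *; unfold Dc in *; unfold Dp, Dm in *; cbv beta; zn.

Lemma I1 (h : R) (e : seqZ) : 0 < h -> L2 e ->
  sumZ (fun j => e j * D3 h e j) = h / 2 * sumZ (fun j => Dp h (Dm h e) j ^ 2).
Proof.
  intros Hh He. rewrite <- sumZ_scal.
  apply (sum_eq_tele _ _ (fun j => e (j - 1)%Z * Dp h (Dm h e) j / h - Dm h e j ^ 2 / (2 * h))); try smt.
  intros j. unf. field. lra.
Qed.

Lemma sumZ_ext (a b : seqZ) : (forall j, a j = b j) -> sumZ a = sumZ b.
Proof. intros H; unfold sumZ; f_equal; apply Series_ext; intros; apply H. Qed.

Lemma I2 (h : R) (e : seqZ) : 0 < h -> L2 e ->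
  sumZ (fun j => Dp h (Dm h e) j ^ 2) = sumZ (fun j => Dp h (Dc h e) j ^ 2) + h ^ 2 / 4 * sumZ (fun j => D3 h e j ^ 2).
Proof.
  intros Hh He. rewrite <- sumZ_scal, <- sumZ_plus by smt.
  apply (sum_eq_tele _ _ (fun j => - Dp h (Dm h e) j ^ 2 / 2)); try smt.
  intros j. unf. field. lra.
Qed.

Lemma I3 (h : R) (e : seqZ) : 0 < h -> L2 e ->
  sumZ (fun j => e j * Dp h (Dm h e) j) = - sumZ (fun j => Dp h e j ^ 2).
Proof.
  intros Hh He. rewrite <- sumZ_opp.
  apply (sum_eq_tele _ _ (fun j => e j * Dm h e j / h)); try smt.
  intros j. unf. field. lra.
Qed.

Lemma I4 (h : R) (e : seqZ) : 0 < h -> L2 e ->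
  sumZ (fun j => D3 h e j * Dp h (Dm h e) j) = - (h / 2) * sumZ (fun j => D3 h e j ^ 2).
Proof.
  intros Hh He. rewrite <- sumZ_scal.
  apply (sum_eq_tele _ _ (fun j => Dp h (Dm h e) j ^ 2 / (2 * h))); try smt.
  intros j. unf. field. lra.
Qed.

Lemma I5 (h : R) (e : seqZ) : 0 < h -> L2 e ->
  sumZ (fun j => e j * Dc h (fun i => e i ^ 2 / 2) j) = - (h ^ 2 / 12) * sumZ (fun j => Dp h e j ^ 3).
Proof.
  intros Hh He. rewrite <- sumZ_scal.
  apply (sum_eq_tele _ _ (fun j => (e j ^ 3 / 3 + e j * e (j - 1)%Z ^ 2) / (4 * h))); try smt.
  intros j. unf. field. lra.
Qed.

Lemma I6 (h : R) (e : seqZ) : 0 < h -> L2 e ->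
  h ^ 2 / 4 * sumZ (fun j => Dp h (Dm h e) j ^ 2) = sumZ (fun j => Dp h e j ^ 2) - sumZ (fun j => Dc h e j ^ 2).
Proof.
  intros Hh He. rewrite <- sumZ_scal, <- sumZ_minus by smt.
  apply (sum_eq_tele _ _ (fun j => - Dm h e j ^ 2 / 2)); try smt.
  intros j. unf. field. lra.
Qed.

Lemma C1 (h : R) (e : seqZ) : 0 < h -> L2 e ->
  sumZ (fun j => Dp h e j * e j * e (j + 1)%Z) = - (h ^ 2 / 3) * sumZ (fun j => Dp h e j ^ 3).
Proof.
  intros Hh He. rewrite <- sumZ_scal.
  apply (sum_eq_tele _ _ (fun j => e j ^ 3 / (3 * h))); try smt.
  intros j. unf. field. lra.
Qed.

Lemma C2 (h : R) (e : seqZ) : 0 < h -> L2 e ->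
  sumZ (fun j => Dc h e j * e (j - 1)%Z * e (j + 1)%Z) = - (4 * h ^ 2 / 3) * sumZ (fun j => Dc h e j ^ 3).
Proof.
  intros Hh He. rewrite <- sumZ_scal.
  apply (sum_eq_tele _ _ (fun j => (e j ^ 3 + e (j - 1)%Z ^ 3) / (6 * h))); try smt.
  intros j. unf. field. lra.
Qed.

Lemma Jid (h : R) (e u : seqZ) : 0 < h -> L2 e -> L2 u ->
  sumZ (fun j => Dc h (fun i => u i * e i) j * Dp h (Dm h e) j) =
  / h ^ 2 * (sumZ (fun j => - (Dp h u j * e j * e (j + 1)%Z)) + sumZ (fun j => Dc h u j * e (j - 1)%Z * e (j + 1)%Z)).
Proof.
  intros Hh He Hu. rewrite <- sumZ_plus by smt. rewrite <- sumZ_scal.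
  apply (sum_eq_tele _ _ (fun j => (u j * e j ^ 2 + u (j - 1)%Z * e (j - 1)%Z ^ 2 - 2 * u (j - 1)%Z * e (j - 1)%Z * e j) / (2 * h ^ 3))); try smt.
  intros j. unf. field. lra.
Qed.

Lemma J3 (h : R) (e : seqZ) : 0 < h -> L2 e ->
  sumZ (fun j => Dc h (fun i => e i ^ 2 / 2) j * Dp h (Dm h e) j) =
  1 / 6 * sumZ (fun j => Dp h e j ^ 3) - 2 / 3 * sumZ (fun j => Dc h e j ^ 3).
Proof.
  intros Hh He.
  assert (Hu : L2 (fun i => e i / 2)) by l2t.
  rewrite (sumZ_ext _ (fun j => Dc h (fun i => e i / 2 * e i) j * Dp h (Dm h e) j)).
  2: { intros j; unf; field; lra. }
  rewrite Jid by auto.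
  rewrite (sumZ_ext (fun j => - (Dp h (fun i => e i / 2) j * e j * e (j + 1)%Z)) (fun j => (- / 2) * (Dp h e j * e j * e (j + 1)%Z))).
  2: { intros j; unf; field; lra. }
  rewrite (sumZ_ext (fun j => Dc h (fun i => e i / 2) j * e (j - 1)%Z * e (j + 1)%Z) (fun j => / 2 * (Dc h e j * e (j - 1)%Z * e (j + 1)%Z))).
  2: { intros j; unf; field; lra. }
  rewrite !sumZ_scal, C1, C2 by auto. field. lra.
Qed.


Lemma Dc_bound (h Up : R) (u : seqZ) : 0 < h -> (forall j, Rabs (Dp h u j) <= Up) -> forall j, Rabs (Dc h u j) <= Up.
Proof.
  intros Hh H j. replace (Dc h u j) with ((Dp h u j + Dp h u (j - 1)%Z) / 2) by (unf; field; lra).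
  pose proof (H j); pose proof (H (j-1)%Z). apply Rabs_le_between in H0; apply Rabs_le_between in H1.
  apply Rabs_le; lra.
Qed.

Lemma bnd_of (d : seqZ) (M : R) : (forall j, Rabs (d j) <= M) -> bnd d.
Proof. intros H; exists M; auto. Qed.

Lemma K1 (d e : seqZ) (Up : R) : L2 e -> (forall j, Rabs (d j) <= Up) ->
  sumZ (fun j => d j * e j * e (j + 1)%Z) <= Up * sumZ (fun j => e j ^ 2).
Proof.
  intros He Hd. assert (bnd d) by (eapply bnd_of; eauto).
  rewrite <- sumZ_scal.
  apply (sum_le_tele _ _ (fun j => Up * e j ^ 2 / 2)); try smt.
  intros j. cbv beta. zn.
  assert (H1 : Rabs (- d j) <= Up) by (rewrite Rabs_Ropp; auto).
  pose proof (R1 (- d j) (e j) (e (j+1)%Z) Up H1). lra.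
Qed.

Lemma K2 (d e : seqZ) (Up : R) : L2 e -> (forall j, Rabs (d j) <= Up) ->
  sumZ (fun j => d j * e (j - 1)%Z * e (j + 1)%Z) <= Up * sumZ (fun j => e j ^ 2).
Proof.
  intros He Hd. assert (bnd d) by (eapply bnd_of; eauto).
  rewrite <- sumZ_scal.
  apply (sum_le_tele _ _ (fun j => Up * (e j ^ 2 - e (j - 1)%Z ^ 2) / 2)); try smt.
  intros j. cbv beta. zn.
  assert (H1 : Rabs (- d j) <= Up) by (rewrite Rabs_Ropp; auto).
  pose proof (R1 (- d j) (e (j + -1)%Z) (e (j+1)%Z) Up H1). lra.
Qed.

Lemma J1 (h Up : R) (e u : seqZ) : 0 < h -> L2 e -> L2 u -> (forall j, Rabs (Dp h u j) <= Up) ->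
  sumZ (fun j => -2 * e j * Dc h (fun i => u i * e i) j) <= Up * sumZ (fun j => e j ^ 2).
Proof.
  intros Hh He Hu HUp.
  rewrite (sum_eq_tele _ (fun j => - Dp h u j * e j * e (j + 1)%Z) (fun j => - u (j - 1)%Z * e (j - 1)%Z * e j / h)); try smt.
  apply K1; auto. intros j; cbv beta; rewrite Rabs_Ropp; auto.
  intros j; unf; field; lra.
Qed.

Lemma J2 (h Up : R) (e u : seqZ) : 0 < h -> L2 e -> L2 u -> (forall j, Rabs (Dp h u j) <= Up) ->
  - (2 * Up / h ^ 2) * sumZ (fun j => e j ^ 2) <= sumZ (fun j => Dc h (fun i => u i * e i) j * Dp h (Dm h e) j).
Proof.
  intros Hh He Hu HUp.
  rewrite Jid by auto.
  pose proof (K1 (Dp h u) e Up He HUp).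
  assert (HDc := Dc_bound h Up u Hh HUp).
  pose proof (K2 (fun j => - Dc h u j) e Up He (fun j => ltac:(cbv beta; rewrite Rabs_Ropp; apply HDc))).
  cbv beta in H0.
  rewrite (sumZ_ext (fun j => - (Dp h u j * e j * e (j + 1)%Z)) (fun j => -1 * (Dp h u j * e j * e (j + 1)%Z))) by (intros; ring).
  rewrite (sumZ_ext (fun j => - Dc h u j * e (j - 1)%Z * e (j + 1)%Z) (fun j => -1 * (Dc h u j * e (j - 1)%Z * e (j + 1)%Z))) in H0 by (intros; ring).
  rewrite sumZ_scal in *.
  assert (0 < / h ^ 2) by (apply Rinv_0_lt_compat; nra).
  replace (- (2 * Up / h ^ 2) * sumZ (fun j => e j ^ 2)) with (/ h ^ 2 * (- (2 * Up) * sumZ (fun j => e j ^ 2))) by (field; lra).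
  apply Rmult_le_compat_l; lra.
Qed.

Lemma J3b (h E : R) (e : seqZ) : 0 < h -> L2 e -> (forall j, Rabs (e j) <= E) ->
  sumZ (fun j => h * Dc h e j ^ 3) <= E * sumZ (fun j => Dc h e j ^ 2).
Proof.
  intros Hh He HE. rewrite <- sumZ_scal. apply sumZ_le; try smt.
  intros j. cbv beta.
  assert (H1 : h * Dc h e j = (e (j + 1)%Z - e (j - 1)%Z) / 2) by (unf; field; lra).
  assert (H2 : Rabs (h * Dc h e j) <= E).
  { rewrite H1. pose proof (HE (j+1)%Z); pose proof (HE (j-1)%Z). apply Rabs_le_between in H; apply Rabs_le_between in H0. apply Rabs_le; lra. }
  replace (h * Dc h e j ^ 3) with ((h * Dc h e j) * Dc h e j ^ 2) by ring.
  apply Rmult_le_compat_r. apply pow2_ge_0. eapply Rle_trans; [apply Rle_abs|auto].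
Qed.

Lemma F3 (a eps : seqZ) : L2 a -> L2 eps ->
  sumZ (fun j => -2 * a j * eps j) <= sumZ (fun j => a j ^ 2) + sumZ (fun j => eps j ^ 2).
Proof.
  intros Ha He. rewrite <- sumZ_plus by smt. apply sumZ_le; try smt.
  intros j; pose proof (pow2_ge_0 (a j + eps j)); nra.
Qed.

Lemma J4 (h U E Up Kd : R) (e u : seqZ) : 0 < h -> L2 e -> L2 u ->
  (forall j, Rabs (u j) <= U) -> (forall j, Rabs (e j) <= E) -> (forall j, Rabs (Dp h u j) <= Up) ->
  (forall j, Dc h u j ^ 2 <= Kd) ->
  sumZ (fun j => Dc h (fun i => u i * e i + e i ^ 2 / 2) j ^ 2) <=
  (U + E) ^ 2 * sumZ (fun j => Dc h e j ^ 2) + (U * Up / h + 2 / 3 * Up * E / h + Kd) * sumZ (fun j => e j ^ 2).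
Proof.
  intros Hh He Hu HU HE HUp HKd.
  assert (HDc := Dc_bound h Up u Hh HUp).
  rewrite <- !sumZ_scal, <- sumZ_plus by smt.
  apply (sum_le_tele _ _ (fun j => (U * Up / h + 2 / 3 * Up * E / h + Kd) / 2 * (e j ^ 2 - e (j - 1)%Z ^ 2))); try smt.
  intros j. cbv beta. zn.
  assert (E1 : Dc h (fun i => u i * e i + e i ^ 2 / 2) j =
     (u (j + 1)%Z * e (j + 1)%Z - u (j + -1)%Z * e (j + -1)%Z + (e (j + 1)%Z ^ 2 - e (j + -1)%Z ^ 2) / 2) / (2 * h)) by (unf; field; lra).
  assert (E2 : Dc h e j = (e (j + 1)%Z - e (j + -1)%Z) / (2 * h)) by (unf; field; lra).
  assert (E3 : Dc h u j = (u (j + 1)%Z - u (j + -1)%Z) / (2 * h)) by (unf; field; lra).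
  pose proof (R_J4 (e (j + 1)%Z) (e (j + -1)%Z) (u (j + 1)%Z) (u (j + -1)%Z) h U E Up Kd Hh
     (HU _) (HU _) (HE _) (HE _) ltac:(rewrite <- E3; auto) ltac:(rewrite <- E3; auto)).
  rewrite E1, E2. lra.
Qed.

Lemma J5 (h c U E : R) (e u eps : seqZ) : 0 < h -> L2 e -> L2 u -> L2 eps ->
  (forall j, Rabs (u j) <= U) -> (forall j, Rabs (e j) <= E) ->
  sumZ (fun j => 2 * Dc h (fun i => u i * e i + e i ^ 2 / 2) j * eps j - c * h * Dp h (Dm h e) j * eps j) <=
  4 / h * sumZ (fun j => eps j ^ 2) + h * E ^ 2 * sumZ (fun j => Dc h e j ^ 2) + (U ^ 2 + 2 * c ^ 2) / h * sumZ (fun j => e j ^ 2).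
Proof.
  intros Hh He Hu Heps HU HE.
  rewrite <- !sumZ_scal, <- !sumZ_plus by smt.
  apply (sum_le_tele _ _ (fun j => (U ^ 2 + c ^ 2) / (2 * h) * (e j ^ 2 - e (j - 1)%Z ^ 2))); try smt.
  intros j. cbv beta. zn.
  assert (E1 : Dc h (fun i => u i * e i + e i ^ 2 / 2) j =
     (u (j + 1)%Z * e (j + 1)%Z - u (j + -1)%Z * e (j + -1)%Z + (e (j + 1)%Z ^ 2 - e (j + -1)%Z ^ 2) / 2) / (2 * h)) by (unf; field; lra).
  assert (E2 : Dc h e j = (e (j + 1)%Z - e (j + -1)%Z) / (2 * h)) by (unf; field; lra).
  assert (E3 : Dp h (Dm h e) j = (e (j + 1)%Z - 2 * e j + e (j + -1)%Z) / h ^ 2) by (unf; field; lra).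
  pose proof (R_J5 (e (j + 1)%Z) (e (j + -1)%Z) (e j) (u (j + 1)%Z) (u (j + -1)%Z) (eps j) h c U E Hh
     (HU _) (HU _) (HE _) (HE _)).
  rewrite E1, E2, E3. lra.
Qed.

Definition beta (u e : seqZ) : seqZ := fun j => (u (j + 1)%Z + u (j - 1)%Z) / 2 + (e (j + 1)%Z + e (j - 1)%Z) / 2.
Definition psi (h : R) (e : seqZ) : seqZ := fun j => Dc h e (j - 1)%Z * ((Dp h e j + Dp h e (j - 2)%Z) / 2).

Lemma L2_beta (u e : seqZ) : L2 u -> L2 e -> L2 (beta u e).
Proof. intros; unfold beta; l2t. Qed.
Lemma L2_psi (h : R) (e : seqZ) : L2 e -> L2 (psi h e).
Proof. intros; unfold psi; l2t. Qed.
#[export] Hint Resolve L2_beta L2_psi : l2db.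

Lemma SBP3 (h : R) (e F : seqZ) : 0 < h -> L2 e -> L2 F ->
  sumZ (fun j => D3 h e j * F j) = - sumZ (fun j => Dp h (Dm h e) j * Dm h F j).
Proof.
  intros Hh He HF. rewrite <- sumZ_opp.
  apply (sum_eq_tele _ _ (fun j => Dp h (Dm h e) j * F (j - 1)%Z / h)); try smt.
  intros j. unf. field. lra.
Qed.

Lemma J6b (h t Up : R) (e u : seqZ) : 0 < h -> 0 < t -> L2 e -> L2 u -> (forall j, Rabs (Dp h u j) <= Up) ->
  sumZ (fun j => 2 * D3 h e j * ((e (j + 1)%Z + e (j - 1)%Z) / 2) * Dc h u j) <=
  t * Up * sumZ (fun j => D3 h e j ^ 2) + Up / t * sumZ (fun j => e j ^ 2).
Proof.
  intros Hh Ht He Hu HUp. assert (HDc := Dc_bound h Up u Hh HUp).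
  assert (HU0 : 0 <= Up) by (eapply Rle_trans; [apply Rabs_pos|apply (HUp 0%Z)]).
  rewrite <- !sumZ_scal, <- sumZ_plus by smt.
  apply (sum_le_tele _ _ (fun j => Up / t / 2 * (e j ^ 2 - e (j - 1)%Z ^ 2))); try smt.
  intros j. cbv beta. zn.
  set (k := D3 h e j). set (m := (e (j + 1)%Z + e (j + -1)%Z) / 2).
  assert (H1 : 2 * k * m * Dc h u j <= 2 * Rabs k * Rabs m * Up).
  { apply abs3; auto. rewrite Rabs_mult, (Rabs_pos_eq 2) by lra; lra. lra. }
  assert (H2 : 2 * Rabs k * Rabs m <= t * k ^ 2 + m ^ 2 / t).
  { rewrite <- (pow2_abs k), <- (pow2_abs m).
    assert (0 <= t * (Rabs k - Rabs m / t) ^ 2) by (apply Rmult_le_pos; [lra|apply pow2_ge_0]).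
    replace (t * Rabs k ^ 2 + Rabs m ^ 2 / t) with (2 * Rabs k * Rabs m + t * (Rabs k - Rabs m / t) ^ 2) by (field; lra). lra. }
  assert (H3 : m ^ 2 <= (e (j + 1)%Z ^ 2 + e (j + -1)%Z ^ 2) / 2).
  { unfold m. pose proof (pow2_ge_0 (e (j + 1)%Z - e (j + -1)%Z)). nra. }
  assert (H4 : 2 * Rabs k * Rabs m * Up <= (t * k ^ 2 + m ^ 2 / t) * Up) by (apply Rmult_le_compat_r; auto).
  assert (H5 : m ^ 2 / t * Up <= (e (j + 1)%Z ^ 2 + e (j + -1)%Z ^ 2) / 2 / t * Up).
  { apply Rmult_le_compat_r; auto. unfold Rdiv; apply Rmult_le_compat_r; [left; apply Rinv_0_lt_compat; lra| auto]. }
  assert (H6 : (e (j + 1)%Z ^ 2 + e (j + -1)%Z ^ 2) / 2 / t * Up = Up / t * e j ^ 2 + (Up / t / 2 * (e (j + 1)%Z ^ 2 - e j ^ 2) - Up / t / 2 * (e j ^ 2 - e (j + -1)%Z ^ 2))) by (field; lra).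
  lra.
Qed.

Lemma GN1 (h : R) (e : seqZ) : 0 < h -> L2 e ->
  sumZ (fun j => psi h e j ^ 2) <= sumZ (fun j => Dp h e j ^ 4).
Proof.
  intros Hh He.
  apply (sum_le_tele _ _ (fun j => - (3 * Dp h e (j - 1)%Z ^ 4 + 2 * Dp h e (j - 2)%Z ^ 4) / 4)); try smt.
  intros j. unfold psi. cbv beta. zn.
  assert (E1 : Dc h e (j + -1)%Z = (Dp h e (j + -2)%Z + Dp h e (j + -1)%Z) / 2) by (unf; field; lra).
  rewrite E1.
  pose proof (R_psi (Dp h e (j + -2)%Z) (Dp h e (j + -1)%Z) (Dp h e j)).
  replace ((Dp h e (j + -2)%Z + Dp h e (j + -1)%Z) / 2 * ((Dp h e j + Dp h e (j + -2)%Z) / 2))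
    with (((Dp h e (j + -2)%Z + Dp h e (j + -1)%Z) / 2) * ((Dp h e (j + -2)%Z + Dp h e j) / 2)) by field.
  rewrite Rpow_mult_distr. lra.
Qed.

Lemma GN2 (h E : R) (e : seqZ) : 0 < h -> L2 e -> (forall j, Rabs (e j) <= E) ->
  sumZ (fun j => Dp h e j ^ 4) <= 9 * E ^ 2 * sumZ (fun j => Dp h (Dm h e) j ^ 2).
Proof.
  intros Hh He HE. rewrite <- sumZ_scal.
  apply (sum_le_tele _ _ (fun j => 2 * (Dp h e (j - 1)%Z ^ 3 * e j / h - Dp h e (j - 1)%Z ^ 4 / 4))); try smt.
  intros j. cbv beta. zn.
  assert (Hid : Dp h e j ^ 4 = - e j * Dp h (Dm h e) j * (Dp h e j ^ 2 + Dp h e j * Dp h e (j + -1)%Z + Dp h e (j + -1)%Z ^ 2)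
     + (Dp h e j ^ 3 * e (j + 1)%Z / h - Dp h e (j + -1)%Z ^ 3 * e j / h)) by (unf; field; lra).
  pose proof (R_GN (e j) (Dp h (Dm h e) j) (Dp h e j) (Dp h e (j + -1)%Z) E (HE j)).
  lra.
Qed.

Lemma J6d (h U E Up Um lam : R) (sigma : nat) (e u : seqZ) : 0 < h -> 0 < lam -> L2 e -> L2 u ->
  (sigma = 0%nat \/ sigma = 1%nat) ->
  (forall j, Rabs (u j) <= U) -> (forall j, Rabs (e j) <= E) -> (forall j, Rabs (Dp h u j) <= Up) ->
  (forall j, Rabs (Dm h u j) <= Um) ->
  sumZ (fun j => -2 * (Dp h (Dm h e) j * Dm h (fun i => beta u e i * Dc h e i) j)) <=
  2 * (U + E) * sumZ (fun j => Dp h (Dc h e) j ^ 2) + (h / 2 * Um + E + lam + Up ^ sigma) * sumZ (fun j => Dp h (Dm h e) j ^ 2)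
  + Up ^ (2 - sigma) * sumZ (fun j => Dp h e j ^ 2) + / lam * sumZ (fun j => psi h e j ^ 2).
Proof.
  intros Hh Hl He Hu Hsig HU HE HUp HUm.
  assert (HU0 : 0 <= Up) by (eapply Rle_trans; [apply Rabs_pos|apply (HUp 0%Z)]).
  rewrite <- !sumZ_scal, <- !sumZ_plus by smt.
  apply (sum_le_tele _ _ (fun j => -2 * (U + E) * Dp h (Dc h e) (j - 1)%Z ^ 2 - 1 / 2 * beta u e j * Dp h (Dm h e) (j - 1)%Z ^ 2
      + Up ^ (2 - sigma) * (- Dp h e (j - 1)%Z ^ 2 - Dp h e (j - 2)%Z ^ 2 / 2))); try smt.
  intros j. cbv beta. zn.
  set (G := Dp h (Dm h e) j). set (G1 := Dp h (Dm h e) (j + -1)%Z). set (Q := Dp h (Dc h e) (j + -1)%Z).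
  set (Q0 := Dp h (Dc h e) j). set (D1 := Dc h e (j + -1)%Z).
  set (P0 := Dp h e j). set (P1 := Dp h e (j + -1)%Z). set (P2 := Dp h e (j + -2)%Z).
  set (Bj := beta u e j). set (Bj1 := beta u e (j + 1)%Z). set (Ps := psi h e j).
  assert (Hid : -2 * (G * Dm h (fun i => beta u e i * Dc h e i) j) =
     -2 * Bj * Q ^ 2 - 1 / 2 * Bj * (G ^ 2 - G1 ^ 2) - G * D1 * (Dp h u j + Dp h u (j + -2)%Z) - 2 * G * Ps).
  { unfold G, G1, Q, D1, Bj, Ps, psi, beta. unf. field. lra. }
  rewrite Hid.
  assert (HB : Rabs Bj <= U + E).
  { unfold Bj, beta. pose proof (HU (j+1)%Z); pose proof (HU (j-1)%Z); pose proof (HE (j+1)%Z); pose proof (HE (j-1)%Z).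
    apply Rabs_le_between in H; apply Rabs_le_between in H0; apply Rabs_le_between in H1; apply Rabs_le_between in H2.
    apply Rabs_le; lra. }
  apply Rabs_le_between in HB.
  assert (B1 : -2 * Bj * Q ^ 2 <= 2 * (U + E) * Q ^ 2).
  { pose proof (pow2_ge_0 Q). nra. }
  assert (Hdb : Bj1 - Bj <= h * Um + 2 * E).
  { assert (Hx : Bj1 - Bj = h / 2 * (Dm h u (j + 2)%Z + Dm h u j) + (e (j + 2)%Z + e j - e (j + 1)%Z - e (j + -1)%Z) / 2).
    { unfold Bj1, Bj, beta. unf. field. lra. }
    rewrite Hx.
    pose proof (HUm (j+2)%Z); pose proof (HUm j); pose proof (HE (j+2)%Z); pose proof (HE j); pose proof (HE (j+1)%Z); pose proof (HE (j + -1)%Z).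
    apply Rabs_le_between in H; apply Rabs_le_between in H0; apply Rabs_le_between in H1; apply Rabs_le_between in H2;
    apply Rabs_le_between in H3; apply Rabs_le_between in H4.
    assert (h / 2 * Dm h u (j + 2)%Z <= h / 2 * Um) by (apply Rmult_le_compat_l; lra).
    assert (h / 2 * Dm h u j <= h / 2 * Um) by (apply Rmult_le_compat_l; lra).
    lra. }
  assert (B2 : 1 / 2 * G ^ 2 * (Bj1 - Bj) <= 1 / 2 * G ^ 2 * (h * Um + 2 * E)).
  { apply Rmult_le_compat_l; auto. pose proof (pow2_ge_0 G); lra. }
  assert (B3a : - G * D1 * (Dp h u j + Dp h u (j + -2)%Z) <= 2 * Up * Rabs G * Rabs D1).
  { replace (2 * Up * Rabs G * Rabs D1) with (Rabs G * Rabs D1 * (2 * Up)) by ring.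
    apply abs3; auto. rewrite Rabs_Ropp; lra. lra.
    pose proof (HUp j); pose proof (HUp (j + -2)%Z).
    eapply Rle_trans; [apply Rabs_triang|]. lra. }
  assert (B3b := R_amgm Up G D1 sigma HU0 Hsig).
  assert (HD1 : D1 = (P1 + P2) / 2) by (unfold D1, P1, P2; unf; field; lra).
  assert (B3c : D1 ^ 2 <= (P1 ^ 2 + P2 ^ 2) / 2).
  { rewrite HD1. pose proof (pow2_ge_0 (P1 - P2)). nra. }
  assert (HUs : 0 <= Up ^ (2 - sigma)) by (apply pow_le; auto).
  assert (B3d : Up ^ (2 - sigma) * D1 ^ 2 <= Up ^ (2 - sigma) * ((P1 ^ 2 + P2 ^ 2) / 2)) by (apply Rmult_le_compat_l; auto).
  assert (B4 : -2 * G * Ps <= lam * G ^ 2 + / lam * Ps ^ 2).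
  { assert (0 <= lam * (G + / lam * Ps) ^ 2) by (apply Rmult_le_pos; [lra|apply pow2_ge_0]).
    replace (lam * G ^ 2 + / lam * Ps ^ 2) with (-2 * G * Ps + lam * (G + / lam * Ps) ^ 2) by (field; lra). lra. }
  assert (Hring : - 1 / 2 * Bj * (G ^ 2 - G1 ^ 2) = 1 / 2 * G ^ 2 * (Bj1 - Bj) - 1 / 2 * Bj1 * G ^ 2 + 1 / 2 * Bj * G1 ^ 2) by (clear; field).
  assert (Hring2 : 1 / 2 * Bj * (G ^ 2 - G1 ^ 2) = - (1 / 2 * G ^ 2 * (Bj1 - Bj) - 1 / 2 * Bj1 * G ^ 2 + 1 / 2 * Bj * G1 ^ 2)) by (clear; field).
  lra.
Qed.

Lemma J6 (h t U E Up Um lam : R) (sigma : nat) (e u : seqZ) : 0 < h -> 0 < t -> 0 < lam -> L2 e -> L2 u ->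
  (sigma = 0%nat \/ sigma = 1%nat) ->
  (forall j, Rabs (u j) <= U) -> (forall j, Rabs (e j) <= E) -> (forall j, Rabs (Dp h u j) <= Up) ->
  (forall j, Rabs (Dm h u j) <= Um) ->
  sumZ (fun j => 2 * D3 h e j * Dc h (fun i => u i * e i + e i ^ 2 / 2) j) <=
  2 * (U + E) * sumZ (fun j => Dp h (Dc h e) j ^ 2) + (h / 2 * Um + E + lam + Up ^ sigma) * sumZ (fun j => Dp h (Dm h e) j ^ 2)
  + Up ^ (2 - sigma) * sumZ (fun j => Dp h e j ^ 2) + / lam * sumZ (fun j => psi h e j ^ 2)
  + t * Up * sumZ (fun j => D3 h e j ^ 2) + Up / t * sumZ (fun j => e j ^ 2).
Proof.
  intros Hh Ht Hl He Hu Hsig HU HE HUp HUm.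
  rewrite (sumZ_ext _ (fun j => 2 * (D3 h e j * (beta u e j * Dc h e j)) + 2 * D3 h e j * ((e (j + 1)%Z + e (j - 1)%Z) / 2) * Dc h u j)).
  2: { intros j; unfold beta; unf; field; lra. }
  rewrite sumZ_plus by smt. rewrite sumZ_scal.
  pose proof (SBP3 h e (fun i => beta u e i * Dc h e i) Hh He ltac:(l2t)) as HS. cbv beta in HS. rewrite HS.
  pose proof (J6d h U E Up Um lam sigma e u Hh Hl He Hu Hsig HU HE HUp HUm) as H6.
  rewrite sumZ_scal in H6.
  pose proof (J6b h t Up e u Hh Ht He Hu HUp).
  lra.
Qed.


Lemma le_scl (c x y : R) : 0 <= c -> x <= y -> c * x <= c * y.
Proof. intros; apply Rmult_le_compat_l; auto. Qed.

Lemma Kd_bound (h t U Up : R) (u : seqZ) : 0 < h -> 0 < t -> (forall j, Rabs (u j) <= U) -> (forall j, Rabs (Dp h u j) <= Up) ->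
  forall j, Dc h u j ^ 2 <= (U ^ 2 + t ^ 2 / h ^ 2 * Up ^ 2) / t.
Proof.
  intros Hh Ht HU HUp j.
  assert (H1 := Dc_bound h Up u Hh HUp j).
  assert (H2 : Rabs (Dc h u j) <= U / h).
  { replace (Dc h u j) with ((u (j + 1)%Z - u (j - 1)%Z) / (2 * h)) by (unf; field; lra).
    pose proof (HU (j+1)%Z); pose proof (HU (j-1)%Z). apply Rabs_le_between in H; apply Rabs_le_between in H0.
    apply Rabs_le. split; [apply Rmult_le_reg_r with (2 * h)| apply Rmult_le_reg_r with (2 * h)]; try lra;
    field_simplify; try lra. }
  apply sq_le_of_abs in H1. apply sq_le_of_abs in H2.
  assert (0 <= U ^ 2) by apply pow2_ge_0. assert (0 <= Up ^ 2) by apply pow2_ge_0.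
  destruct (Rle_dec t (h ^ 2)).
  - assert ((U / h) ^ 2 <= U ^ 2 / t).
    { replace ((U / h) ^ 2) with (U ^ 2 / h ^ 2) by (field; lra). unfold Rdiv. apply Rmult_le_compat_l; auto.
      apply Rinv_le_contravar; lra. }
    assert (U ^ 2 / t <= (U ^ 2 + t ^ 2 / h ^ 2 * Up ^ 2) / t).
    { unfold Rdiv. apply Rmult_le_compat_r. left; apply Rinv_0_lt_compat; lra.
      assert (0 <= t ^ 2 * / h ^ 2 * Up ^ 2) by (apply Rmult_le_pos; [apply Rmult_le_pos; [apply pow2_ge_0|left; apply Rinv_0_lt_compat; nra]|auto]). lra. }
    lra.
  - assert (Up ^ 2 <= t / h ^ 2 * Up ^ 2).
    { replace (Up ^ 2) with (1 * Up ^ 2) at 1 by ring. apply Rmult_le_compat_r; auto.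
      apply Rmult_le_reg_r with (h ^ 2). nra. field_simplify; nra. }
    assert (t / h ^ 2 * Up ^ 2 <= (U ^ 2 + t ^ 2 / h ^ 2 * Up ^ 2) / t).
    { replace ((U ^ 2 + t ^ 2 / h ^ 2 * Up ^ 2) / t) with (U ^ 2 / t + t / h ^ 2 * Up ^ 2) by (field; nra).
      assert (0 <= U ^ 2 / t) by (unfold Rdiv; apply Rmult_le_pos; auto; left; apply Rinv_0_lt_compat; lra). lra. }
    lra.
Qed.

Lemma MAIN (h t c th U Up Um E lam : R) (sigma : nat) (e u eps : seqZ) :
  0 < h -> 0 < t -> 0 < c -> 0 <= th <= 1 -> 0 < lam -> L2 e -> L2 u -> L2 eps ->
  (sigma = 0%nat \/ sigma = 1%nat) ->
  (forall j, Rabs (u j) <= U) -> (forall j, Rabs (e j) <= E) -> (forall j, Rabs (Dp h u j) <= Up) ->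
  (forall j, Rabs (Dm h u j) <= Um) ->
  sumZ (fun j => (Aop (- (1 - th)) t h e j - t * (Dc h (fun i => u i * e i + e i ^ 2 / 2) j - c * h / 2 * Dp h (Dm h e) j + eps j)) ^ 2)
  <= sumZ (fun j => Aop th t h e j ^ 2)
   + t * (U ^ 2 + Up * (2 - th + t / h * (2 * c + 2 / 3 * E + 3 / 2 * U)) + t ^ 2 / h ^ 2 * Up ^ 2 + t / h * (U ^ 2 + 2 * c ^ 2)) * sumZ (fun j => e j ^ 2)
   + t * sumZ (fun j => Aop (- (1 - th)) t h e j ^ 2)
   + t * sumZ (fun j => eps j ^ 2) * (1 + 4 * (t / h) + t)
   + t * sumZ (fun j => ((h / 6 * Dp h e j - c * 1) * (h - c * t) + (1 - th) * t * Up ^ (2 - sigma) * 1) * Dp h e j ^ 2)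
   + t ^ 2 * (E ^ 2 * (1 + h) + U ^ 2 - c ^ 2 + 2 * E * U + 2 * c / 3 * E) * sumZ (fun j => Dc h e j ^ 2)
   + t * ((1 - th) * t * (Up ^ sigma + h / 2 * Um)) * sumZ (fun j => Dp h (Dm h e) j ^ 2)
   + t * (2 * (1 - th) * t * (U + E + (lam + E + 9 * E ^ 2 * / lam) / 2) - h) * sumZ (fun j => Dp h (Dc h e) j ^ 2)
   + t * (t * ((1 - 2 * th) + (1 - th) * h ^ 2 / 2 * (c + (lam + E + 9 * E ^ 2 * / lam) / 2) + t * (1 - th) * Up) - h ^ 3 / 4)
       * sumZ (fun j => D3 h e j ^ 2).
Proof.
  intros Hh Ht Hc Hth Hl He Hu Heps Hsig HU HE HUp HUm.
  assert (Hs : 0 <= (1 - th) * t) by nra.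
  assert (HWp : forall j, Dc h (fun i => u i * e i + e i ^ 2 / 2) j = Dc h (fun i => u i * e i) j + Dc h (fun i => e i ^ 2 / 2) j)
    by (intros; unf; field; lra).
  rewrite (sumZ_ext _ (fun j =>
    Aop (- (1 - th)) t h e j ^ 2
  + (t * (-2 * Aop (- (1 - th)) t h e j * eps j)
  + (t * (-2 * e j * Dc h (fun i => u i * e i) j)
  + (-2 * t * (e j * Dc h (fun i => e i ^ 2 / 2) j)
  + (t * c * h * (e j * Dp h (Dm h e) j)
  + (t * ((1 - th) * t) * (2 * D3 h e j * Dc h (fun i => u i * e i + e i ^ 2 / 2) j)
  + (- (t * ((1 - th) * t) * c * h) * (D3 h e j * Dp h (Dm h e) j)
  + (t ^ 2 * (Dc h (fun i => u i * e i + e i ^ 2 / 2) j ^ 2)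
  + (- (t ^ 2 * c * h) * (Dc h (fun i => u i * e i) j * Dp h (Dm h e) j)
  + (- (t ^ 2 * c * h) * (Dc h (fun i => e i ^ 2 / 2) j * Dp h (Dm h e) j)
  + (t ^ 2 * c ^ 2 * h ^ 2 / 4 * (Dp h (Dm h e) j ^ 2)
  + (t ^ 2 * (2 * Dc h (fun i => u i * e i + e i ^ 2 / 2) j * eps j - c * h * Dp h (Dm h e) j * eps j)
  + t ^ 2 * (eps j ^ 2)))))))))))))).
  2: { intros j. rewrite !HWp. unfold Aop. field. }
  repeat (rewrite sumZ_plus by smt).
  rewrite !sumZ_scal.
  set (a := Aop (- (1 - th)) t h e).
  assert (HUp0 : 0 <= Up) by (eapply Rle_trans; [apply Rabs_pos|apply (HUp 0%Z)]).
  assert (HU0 : 0 <= U) by (eapply Rle_trans; [apply Rabs_pos|apply (HU 0%Z)]).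
  assert (HE0 : 0 <= E) by (eapply Rle_trans; [apply Rabs_pos|apply (HE 0%Z)]).
  assert (Ha : L2 a) by (unfold a; l2t).
  assert (HSe : 0 <= sumZ (fun j => e j ^ 2)) by (apply sumZ_nonneg; [smt|intros; apply pow2_ge_0]).
  pose proof (F3 a eps Ha Heps) as f1. apply (le_scl t) in f1; [|lra].
  pose proof (J1 h Up e u Hh He Hu HUp) as f2. apply (le_scl t) in f2; [|lra].
  assert (f3 : -2 * t * sumZ (fun j => e j * Dc h (fun i => e i ^ 2 / 2) j) = t * h ^ 2 / 6 * sumZ (fun j => Dp h e j ^ 3))
    by (rewrite I5 by auto; field).
  assert (f4 : t * c * h * sumZ (fun j => e j * Dp h (Dm h e) j) = - (t * c * h) * sumZ (fun j => Dp h e j ^ 2))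
    by (rewrite I3 by auto; ring).
  pose proof (J6 h t U E Up Um lam sigma e u Hh Ht Hl He Hu Hsig HU HE HUp HUm) as f5.
  apply (le_scl (t * ((1 - th) * t))) in f5; [|nra].
  assert (f6 : - (t * ((1 - th) * t) * c * h) * sumZ (fun j => D3 h e j * Dp h (Dm h e) j)
      = t * ((1 - th) * t) * c * h * (h / 2) * sumZ (fun j => D3 h e j ^ 2)) by (rewrite I4 by auto; ring).
  pose proof (J4 h U E Up ((U ^ 2 + t ^ 2 / h ^ 2 * Up ^ 2) / t) e u Hh He Hu HU HE HUp (Kd_bound h t U Up u Hh Ht HU HUp)) as f7.
  apply (le_scl (t ^ 2)) in f7; [|nra].
  assert (f7b : t ^ 2 * ((U * Up / h + 2 / 3 * Up * E / h + (U ^ 2 + t ^ 2 / h ^ 2 * Up ^ 2) / t) * sumZ (fun j => e j ^ 2))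
     = t ^ 2 * (U * Up / h + 2 / 3 * Up * E / h) * sumZ (fun j => e j ^ 2) + t * U ^ 2 * sumZ (fun j => e j ^ 2)
       + t * (t ^ 2 / h ^ 2 * Up ^ 2) * sumZ (fun j => e j ^ 2)) by (field; lra).
  pose proof (J2 h Up e u Hh He Hu HUp) as f8.
  apply (le_scl (t ^ 2 * c * h)) in f8; [|apply Rmult_le_pos; [apply Rmult_le_pos|]; nra].
  assert (f8b : t ^ 2 * c * h * (- (2 * Up / h ^ 2) * sumZ (fun j => e j ^ 2)) = - (t * (t / h) * 2 * c * Up * sumZ (fun j => e j ^ 2)))
    by (field; lra).
  assert (f9 : - (t ^ 2 * c * h) * sumZ (fun j => Dc h (fun i => e i ^ 2 / 2) j * Dp h (Dm h e) j)
      = - (t ^ 2 * c * h) / 6 * sumZ (fun j => Dp h e j ^ 3) + 2 / 3 * t ^ 2 * c * (h * sumZ (fun j => Dc h e j ^ 3)))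
    by (rewrite J3 by auto; field).
  pose proof (J3b h E e Hh He HE) as f9b. rewrite sumZ_scal in f9b.
  apply (le_scl (2 / 3 * t ^ 2 * c)) in f9b; [|nra].
  assert (f10 : t ^ 2 * c ^ 2 * h ^ 2 / 4 * sumZ (fun j => Dp h (Dm h e) j ^ 2)
     = t ^ 2 * c ^ 2 * (sumZ (fun j => Dp h e j ^ 2) - sumZ (fun j => Dc h e j ^ 2))).
  { rewrite <- I6 by auto. field. }
  pose proof (J5 h c U E e u eps Hh He Hu Heps HU HE) as f11. apply (le_scl (t ^ 2)) in f11; [|nra].
  pose proof (GN1 h e Hh He) as g1. pose proof (GN2 h E e Hh He HE) as g2.
  assert (f12 : t * ((1 - th) * t) * / lam * sumZ (fun j => psi h e j ^ 2)
     <= t * ((1 - th) * t) * / lam * (9 * E ^ 2 * sumZ (fun j => Dp h (Dm h e) j ^ 2))).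
  { apply le_scl. apply Rmult_le_pos; [nra|left; apply Rinv_0_lt_compat; lra]. lra. }
  assert (f13 : t * ((1 - th) * t) * (lam + E + 9 * E ^ 2 * / lam) * sumZ (fun j => Dp h (Dm h e) j ^ 2)
     = t * ((1 - th) * t) * (lam + E + 9 * E ^ 2 * / lam) * (sumZ (fun j => Dp h (Dc h e) j ^ 2) + h ^ 2 / 4 * sumZ (fun j => D3 h e j ^ 2)))
    by (rewrite I2 by auto; ring).
  assert (f14 : sumZ (fun j => Aop th t h e j ^ 2) = sumZ (fun j => a j ^ 2) + 2 * t * sumZ (fun j => e j * D3 h e j)
      + t ^ 2 * (2 * th - 1) * sumZ (fun j => D3 h e j ^ 2)).
  { rewrite (sumZ_ext _ (fun j => a j ^ 2 + (2 * t * (e j * D3 h e j) + t ^ 2 * (2 * th - 1) * (D3 h e j ^ 2)))).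
    2: { intros j; unfold a, Aop; ring. }
    rewrite !sumZ_plus by smt. rewrite !sumZ_scal. ring. }
  assert (f15 : 2 * t * sumZ (fun j => e j * D3 h e j) = t * h * sumZ (fun j => Dp h (Dm h e) j ^ 2))
    by (rewrite I1 by auto; field).
  assert (f16 : t * h * sumZ (fun j => Dp h (Dm h e) j ^ 2) = t * h * sumZ (fun j => Dp h (Dc h e) j ^ 2) + t * h * (h ^ 2 / 4) * sumZ (fun j => D3 h e j ^ 2))
    by (rewrite I2 by auto; ring).
  assert (f17 : t * ((1 - th) * t) * (Up / t * sumZ (fun j => e j ^ 2)) = t * (1 - th) * Up * sumZ (fun j => e j ^ 2))
    by (field; lra).
  assert (f18 : t * sumZ (fun j => ((h / 6 * Dp h e j - c * 1) * (h - c * t) + (1 - th) * t * Up ^ (2 - sigma) * 1) * Dp h e j ^ 2)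
     = t * (h / 6 * (h - c * t)) * sumZ (fun j => Dp h e j ^ 3) - t * (c * (h - c * t)) * sumZ (fun j => Dp h e j ^ 2)
       + t * ((1 - th) * t * Up ^ (2 - sigma)) * sumZ (fun j => Dp h e j ^ 2)).
  { rewrite (sumZ_ext _ (fun j => h / 6 * (h - c * t) * Dp h e j ^ 3 + (- (c * (h - c * t)) * Dp h e j ^ 2 + (1 - th) * t * Up ^ (2 - sigma) * Dp h e j ^ 2))).
    2: { intros j; ring. }
    rewrite !sumZ_plus by smt. rewrite !sumZ_scal. ring. }
  assert (slack : 0 <= t * (t / h) * Up * U * sumZ (fun j => e j ^ 2)).
  { apply Rmult_le_pos; auto. apply Rmult_le_pos; auto. apply Rmult_le_pos; auto. apply Rmult_le_pos; [lra|].
    unfold Rdiv; apply Rmult_le_pos; [lra|left; apply Rinv_0_lt_compat; lra]. }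
  fold a.
  lra.
Qed.


Lemma normD_sq (h : R) (x : seqZ) : 0 <= h -> L2 x -> normD h x ^ 2 = h * sumZ (fun j => x j ^ 2).
Proof.
  intros Hh Hx. unfold normD, ipD. rewrite pow2_sqrt.
  f_equal; apply sumZ_ext; intros; ring.
  apply Rmult_le_pos; auto. apply sumZ_nonneg. eapply summ_domA; [|exact Hx]. intros; cbv beta; apply Req_le; f_equal; ring.
  intros; cbv beta; nra.
Qed.

Ltac solve_by_hyp H dt :=
  match goal with |- ?L = ?R =>
    match type of H with ?SL = ?SR =>
      replace L with (R + dt * (SL - SR)) by (field; lra); rewrite H; ring
    end
  end.

Theorem proposition2
  (u0 : R -> R) (u : R -> R -> R) (T c : R)
  (HT : 0 < T) (Hc : 0 < c)
  (Hsol : KdV_solution u0 T u) :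
  forall (theta dt dx : R) (v : nat -> seqZ) (n : nat) (gamma : R) (sigma : nat),
  0 <= theta <= 1 -> 0 < dt -> 0 < dx ->
  (forall m : nat, l2Z (uavg u0 u T dt dx m)) ->
  scheme_solution c theta dt dx u0 v ->
  (n < Nsteps T dt)%nat ->
  0 <= gamma < 1 / 2 ->
  (sigma = 0%nat \/ sigma = 1%nat) ->
  let ua := uavg u0 u T dt dx in
  let e := err v ua in
  let eps := cons_err c theta dt dx ua in
  let U := linf (ua n) in
  let Up := linf (Dp dx (ua n)) in
  let Um := linf (Dm dx (ua n)) in
  let E := linf (e n) in
  let X := Rpower dx (1 / 2 - gamma) + E + 9 * E ^ 2 * Rpower dx (gamma - 1 / 2) in
  let Aa := U ^ 2 + Up * (2 - theta + dt / dx * (2 * c + 2 / 3 * E + 3 / 2 * U))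
            + dt ^ 2 / dx ^ 2 * Up ^ 2 + dt / dx * (U ^ 2 + 2 * c ^ 2) in
  let Ab : seqZ := fun j => (dx / 6 * Dp dx (e n) j - c * 1) * (dx - c * dt)
            + (1 - theta) * dt * Up ^ (2 - sigma) * 1 in
  let Ac := E ^ 2 * (1 + dx) + U ^ 2 - c ^ 2 + 2 * E * U + 2 * c / 3 * E in
  let Ad := (1 - theta) * dt * (Up ^ sigma + dx / 2 * Um) in
  let Ae := 2 * (1 - theta) * dt * (U + E + X / 2) - dx in
  let Af := dt * ((1 - 2 * theta) + (1 - theta) * dx ^ 2 / 2 * (c + X / 2)
                  + dt * (1 - theta) * Up) - dx ^ 3 / 4 in
  normD dx (Aop theta dt dx (e (S n))) ^ 2 <=
    normD dx (Aop theta dt dx (e n)) ^ 2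
    + dt * Aa * normD dx (e n) ^ 2
    + dt * normD dx (Aop (- (1 - theta)) dt dx (e n)) ^ 2
    + dt * normD dx (eps n) ^ 2 * (1 + 4 * (dt / dx) + dt)
    + dt * ipD dx Ab (sqZ (Dp dx (e n)))
    + dt ^ 2 * Ac * normD dx (Dc dx (e n)) ^ 2
    + dt * Ad * normD dx (Dp dx (Dm dx (e n))) ^ 2
    + dt * Ae * normD dx (Dp dx (Dc dx (e n))) ^ 2
    + dt * Af * normD dx (D3 dx (e n)) ^ 2.
Proof.
  intros theta dt dx v n gamma sigma Hth Hdt Hdx Hua Hsch Hn Hgam Hsig ua e eps U Up Um E X Aa Ab Ac Ad Ae Af.
  destruct Hsch as [Hv0 [Hvl2 Hvs]].
  assert (Hu : forall m, L2 (ua m)) by (intros m; apply L2_of_l2Z; apply Hua).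
  assert (Hv : forall m, L2 (v m)) by (intros m; apply L2_of_l2Z; apply Hvl2).
  clearbody ua.
  assert (Hu0 := Hu n). assert (Hu1 := Hu (S n)). assert (Hv0' := Hv n). assert (Hv1 := Hv (S n)).
  assert (He0 : L2 (e n)) by (unfold e, err; l2t).
  assert (He1 : L2 (e (S n))) by (unfold e, err; l2t).
  assert (Heps : L2 (eps n)) by (unfold eps, cons_err; l2t).
  assert (Herr : forall j, Aop theta dt dx (e (S n)) j =
     Aop (- (1 - theta)) dt dx (e n) j - dt * (Dc dx (fun i => ua n i * e n i + e n i ^ 2 / 2) j - c * dx / 2 * Dp dx (Dm dx (e n)) j + eps n j)).
  { intros j. pose proof (Hvs n j) as H. unfold eps, cons_err, e, err. revert H. unf. intros H. solve_by_hyp H dt. }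
  assert (HU : forall j, Rabs (ua n j) <= U) by (intros; unfold U; apply linf_bound, L2_bnd; auto).
  assert (HUp : forall j, Rabs (Dp dx (ua n) j) <= Up) by (intros; unfold Up; apply linf_bound, L2_bnd; l2t).
  assert (HUm : forall j, Rabs (Dm dx (ua n) j) <= Um) by (intros; unfold Um; apply linf_bound, L2_bnd; l2t).
  assert (HE : forall j, Rabs (e n j) <= E) by (intros; unfold E; apply linf_bound, L2_bnd; auto).
  set (lam := Rpower dx (1 / 2 - gamma)) in *.
  assert (Hl : 0 < lam) by (unfold lam, Rpower; apply exp_pos).
  assert (Hinv : Rpower dx (gamma - 1 / 2) = / lam).
  { unfold lam. rewrite <- Rpower_Ropp. f_equal. ring. }
  pose proof (MAIN dx dt c theta U Up Um E lam sigma (e n) (ua n) (eps n) Hdx Hdt Hc Hth Hl He0 Hu0 Heps Hsig HU HE HUp HUm) as HM.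
  rewrite (sumZ_ext _ (fun j => Aop theta dt dx (e (S n)) j ^ 2)) in HM by (intros; rewrite Herr; reflexivity).
  apply (le_scl dx) in HM; [|lra].
  assert (Hdx0 : 0 <= dx) by lra.
  rewrite !normD_sq by (auto; l2t).
  unfold ipD.
  rewrite (sumZ_ext (fun j => Ab j * sqZ (Dp dx (e n)) j)
     (fun j => ((dx / 6 * Dp dx (e n) j - c * 1) * (dx - c * dt) + (1 - theta) * dt * Up ^ (2 - sigma) * 1) * Dp dx (e n) j ^ 2))
     by (intros; unfold Ab, sqZ; reflexivity).
  unfold Aa, Ac, Ad, Ae, Af, X. rewrite Hinv.
  lra.
Qed.
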